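(* Let $\mathcal G$ be a rooted digraph, $T>0$ and $r\in(0,1)^N$. Let $\xi\in\Xi$ contain (as a block of consecutive terms) the synchronization string $\zeta$ with respect to some root $i^*\in\mathcal V_R$. Then there exist constants $\bar t\ge0$, $\bar k\in\mathbb Z_{\ge0}$ (not depending on the solution) such that for every maximal solution $x=(\tau,\lambda)$ of $\mathcal H_\xi$ with $\lambda(0,0)=0$ and $\tau(0,0)\in[0,1]^N$ there exists a hybrid time $(t^*,k^* )\in\operatorname{dom}(x)$ with $t^*\le\bar t$, $k^*\le\bar k$, such that $\tau(t,k)\in\mathcal A_s$ for all $(t,k)\in\operatorname{dom}(x)$ with $(t,k)\succeq(t^*,k^* )$.
   Context: $\mathcal G=(\mathcal V,\mathcal E)$ is a simple digraph on $\mathcal V=\{1,\dots,N\}$; $(i,j)\in\mathcal E$ means $j$ is an out-neighbor of $i$; $\mathcal E_i^-$ is the set of out-edges of $i$. A path is a sequence of pairwise distinct vertices with consecutive pairs in $\mathcal E$, its length the number of edges. A root is a vertex from which every other vertex is reachable by a path; $\mathcal V_R$ is the set of roots; rooted means $\mathcal V_R\ne\varnothing$. For a root $i^*$, $\mathcal V_q(i^* )$ is the set of vertices whose shortest path from $i^*$ has length $q$ (so $\mathcal V_0(i^* )=\{i^*\}$), and $q^*$ is the maximal such $q$. Let $\underline r=\min_ir_i$ and $\ell^*:=N(\lfloor1/\underline r\rfloor+1)$. A subgraph $(\mathcal V,\mathcal E')$, $\mathcal E'\subseteq\mathcal E$, is feasible if for every $i$ either $\mathcal E_i^-\subseteq\mathcal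 E'$ or $\mathcal E_i^-\cap\mathcal E'=\varnothing$. $\Xi$ is the set of infinite sequences $\xi=\phi_1\phi_2\cdots$ of feasible subgraphs; write $\phi_\lambda=(\mathcal V,\mathcal E_\lambda)$. For $q=0,\dots,q^*-1$ let $\mathcal G_q=(\mathcal V,\bigcup_{i\in\mathcal V_q(i^* )}\mathcal E_i^-)$. The synchronization string w.r.t. $i^*$ is the finite string $\zeta=\mathcal G_0\cdots\mathcal G_0\,\mathcal G_1\cdots\mathcal G_1\cdots\mathcal G_{q^*-1}\cdots\mathcal G_{q^*-1}$ in which each $\mathcal G_q$ is repeated consecutively $\ell^*$ times (length $\ell^*q^*$). Hybrid system $\mathcal H_\xi$: state $x=(\tau,\lambda)\in\mathbb R^N_{\ge0}\times\mathbb Z_{\ge0}$; flow set $C=[0,1]^N\times\mathbb Z_{\ge0}$ with $\dot\tau=\frac1T\mathbf 1_N$, $\dot\lambda=0$; jump set $D=D_\tau\times\mathbb Z_{\ge0}$, $D_\tau=\{\tau\in[0,1]^N:\max_i\tau_i=1\}$, with $x^+\in G_{\lambda+1}(\tau)\times\{\lambda+1\}$. For $\lambda\ge1$, $G_\lambda$ is the outer-semicontinuous hull (map whose graph is the closure of the graph) of $G_\lambda^0(\tau)=\{g\in\mathbb R^N:g_i=0,\ g_j\in\mathcal R_{j,\lambda}(\tau)\ \forall j\ne i\}$, where $i$ is an agent with $\tau_i=1$ and $\mathcal R_{j,\lambda}(\tau)$ equals $\{0\}$ if $(i,j)\in\mathcal E_\lambda$ and $\tau_j\in[0,r_j)$;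 $\{0,1\}$ if $(i,j)\in\mathcal E_\lambda$ and $\tau_j=r_j$; $\{1\}$ if $(i,j)\in\mathcal E_\lambda$ and $\tau_j\in(r_j,1]$; $\{\tau_j\}$ if $(i,j)\notin\mathcal E_\lambda$. Solutions: a hybrid time domain is $E\subset\mathbb R_{\ge0}\times\mathbb Z_{\ge0}$ whose truncations have the form $\bigcup_k[t_k,t_{k+1}]\times\{k\}$, $0=t_0\le t_1\le\cdots$. A solution is a function $x$ on such a domain, locally absolutely continuous in $t$ for fixed $k$, with $x(0,0)\in C\cup D$; $x(t,k)\in C$ and $\dot x=f(x)$ for a.e. $t$ in flow intervals; and $x(t,k)\in D$, $x(t,k+1)\in G(x(t,k))$ whenever $(t,k),(t,k+1)\in\operatorname{dom}x$. It is maximal if its domain cannot be properly extended. $(t_1,k_1)\preceq(t_2,k_2)$ means $t_1\le t_2$ and $k_1\le k_2$. $\mathcal A_s:=\{\mu\mathbf 1_N:\mu\in[0,1]\}\cup\{0,1\}^N$. *)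

(* Defs.v *)
From Stdlib Require Import Reals ZArith.
From mathcomp Require Import all_boot.
Set Implicit Arguments.
Unset Strict Implicit.
Unset Printing Implicit Defensive.
Local Open Scope R_scope.

(* Vertices are 'I_N (i.e. {0,...,N-1}, a relabelling of
   {1,...,N}); a digraph is an edge relation E : rel 'I_N, with E i j
   meaning (i,j) is an edge, i.e. j is an out-neighbour of i.           *)

Definition simple_digraph (N : nat) (E : rel 'I_N) : Prop :=
  forall i, ~~ E i i.

(* a path i = v_0, v_1, ..., v_q = j : pairwise distinct vertices with
   consecutive pairs in E; its length is q = size rest *)
Definition is_path (N : nat) (E : rel 'I_N) (i j : 'I_N) (rest : seq 'I_N) : Prop :=
  path E i rest /\ uniq (i :: rest) /\ last i rest = j.

Definition reachable (N : nat) (E : rel 'I_N) (i j : 'I_N) : Prop :=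
  exists rest, is_path E i j rest.

Definition is_root (N : nat) (E : rel 'I_N) (i : 'I_N) : Prop :=
  forall j, j <> i -> reachable E i j.

Definition rooted (N : nat) (E : rel 'I_N) : Prop := exists i, is_root E i.

Definition shortest_dist (N : nat) (E : rel 'I_N) (i j : 'I_N) (q : nat) : Prop :=
  (exists rest, is_path E i j rest /\ size rest = q) /\
  (forall rest, is_path E i j rest -> (q <= size rest)%N).

Definition in_Vq (N : nat) (E : rel 'I_N) (i : 'I_N) (q : nat) (j : 'I_N) : Prop :=
  shortest_dist E i j q.

Definition is_qstar (N : nat) (E : rel 'I_N) (i : 'I_N) (q : nat) : Prop :=
  (exists j, in_Vq E i q j) /\ (forall q' j, in_Vq E i q' j -> (q' <= q)%N).

Definition feasible (N : nat) (E E' : rel 'I_N) : Prop :=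
  (forall i j, E' i j -> E i j) /\
  (forall i, (forall j, E i j -> E' i j) \/ (forall j, ~~ E' i j)).

Definition rmin (N : nat) (r : 'I_N -> R) : R := \big[Rmin/1]_(i < N) r i.

Definition ellstar (N : nat) (r : 'I_N -> R) : nat :=
  (N * (Z.to_nat (Int_part (/ rmin r)) + 1))%N.

Definition Gq (N : nat) (E : rel 'I_N) (istar : 'I_N) (q : nat) (a b : 'I_N) : Prop :=
  E a b /\ in_Vq E istar q a.

(* Sequences xi = phi_1 phi_2 ... are represented by xi : nat -> rel 'I_N
   with phi_(n+1) = xi n.  xi contains the synchronization string
   zeta = G_0^{lstar} G_1^{lstar} ... G_{qstar-1}^{lstar} as a block of consecutive terms:
   for some offset s, phi_(s+1+m) = zeta_m for all m < lstar qstar,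
   where zeta_m = G_(m / lstar). *)
Definition contains_sync (N : nat) (E : rel 'I_N) (r : 'I_N -> R)
    (istar : 'I_N) (xi : nat -> rel 'I_N) : Prop :=
  exists qs s, is_qstar E istar qs /\
    forall m, (m < ellstar r * qs)%N ->
      forall a b, xi (s + m)%N a b = true <-> Gq E istar (m %/ ellstar r)%N a b.

Definition in_unit_cube (N : nat) (tau : 'I_N -> R) : Prop :=
  forall i, 0 <= tau i <= 1.

Definition in_C (N : nat) (tau : 'I_N -> R) (lam : nat) : Prop := in_unit_cube tau.

Definition in_Dtau (N : nat) (tau : 'I_N -> R) : Prop :=
  in_unit_cube tau /\ exists i, tau i = 1.

Definition in_D (N : nat) (tau : 'I_N -> R) (lam : nat) : Prop := in_Dtau tau.

Definition Rset (N : nat) (r : 'I_N -> R) (phi : rel 'I_N) (i j : 'I_N)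
    (tau : 'I_N -> R) (y : R) : Prop :=
  if phi i j then
    (0 <= tau j < r j /\ y = 0) \/
    (tau j = r j /\ (y = 0 \/ y = 1)) \/
    (r j < tau j <= 1 /\ y = 1)
  else y = tau j.

Definition G0 (N : nat) (r : 'I_N -> R) (phi : rel 'I_N) (tau g : 'I_N -> R) : Prop :=
  in_Dtau tau /\
  exists i, tau i = 1 /\ g i = 0 /\ forall j, j <> i -> Rset r phi i j tau (g j).

(* G_lambda: outer-semicontinuous hull (closure of the graph of G^0) *)
Definition Gjump (N : nat) (r : 'I_N -> R) (phi : rel 'I_N) (tau g : 'I_N -> R) : Prop :=
  forall eps, 0 < eps -> exists tau' g',
    (forall j, Rabs (tau' j - tau j) < eps /\ Rabs (g' j - g j) < eps) /\
    G0 r phi tau' g'.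

Definition null_set (S : R -> Prop) : Prop :=
  forall eps, 0 < eps -> exists a b : nat -> R,
    (forall n, a n <= b n) /\
    (forall x, S x -> exists n, a n < x < b n) /\
    (forall M, \big[Rplus/0]_(n < M) (b n - a n) < eps).

Definition abs_cont_on (f : R -> R) (c d : R) : Prop :=
  forall eps, 0 < eps -> exists delta, 0 < delta /\
    forall (n : nat) (a b : nat -> R),
      (forall i, (i < n)%N -> c <= a i <= b i /\ b i <= d) ->
      (forall i j, (i < n)%N -> (j < n)%N -> i <> j -> b i <= a j \/ b j <= a i) ->
      \big[Rplus/0]_(i < n) (b i - a i) < delta ->
      \big[Rplus/0]_(i < n) Rabs (f (b i) - f (a i)) < eps.

(* Hybrid time domains and solutions. A hybrid arc is given by its domain
   dom : R -> nat -> Prop and its components tau, lam (values outside dom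
   are irrelevant). *)

Definition hybrid_time_domain (dom : R -> nat -> Prop) : Prop :=
  (forall t k, dom t k -> 0 <= t) /\
  forall T J, dom T J -> exists ts : nat -> R,
    ts 0%N = 0 /\ (forall k, (k <= J)%N -> ts k <= ts k.+1) /\
    forall t k, (dom t k /\ t <= T /\ (k <= J)%N) <->
                ((k <= J)%N /\ ts k <= t <= ts k.+1).

Definition is_solution (N : nat) (E : rel 'I_N) (T : R) (r : 'I_N -> R)
    (xi : nat -> rel 'I_N)
    (dom : R -> nat -> Prop) (tau : R -> nat -> 'I_N -> R) (lam : R -> nat -> nat) : Prop :=
  hybrid_time_domain dom /\ dom 0 0%N /\
  (in_C (tau 0 0%N) (lam 0 0%N) \/ in_D (tau 0 0%N) (lam 0 0%N)) /\
  (forall k c d, c <= d -> (forall t, c <= t <= d -> dom t k) ->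
     (forall j, abs_cont_on (fun s => tau s k j) c d) /\
     abs_cont_on (fun s => INR (lam s k)) c d) /\
  (forall t k, (exists e, 0 < e /\ forall s, Rabs (s - t) < e -> dom s k) ->
     in_C (tau t k) (lam t k)) /\
  (forall k, null_set (fun t => dom t k /\
     ~ ((forall j, derivable_pt_lim (fun s => tau s k j) t (/ T)) /\
        derivable_pt_lim (fun s => INR (lam s k)) t 0))) /\
  (forall t k, dom t k -> dom t k.+1 ->
     in_D (tau t k) (lam t k) /\
     Gjump r (xi (lam t k)) (tau t k) (tau t k.+1) /\
     lam t k.+1 = (lam t k).+1).

Definition is_maximal_solution (N : nat) (E : rel 'I_N) (T : R) (r : 'I_N -> R)
    (xi : nat -> rel 'I_N)
    (dom : R -> nat -> Prop) (tau : R -> nat -> 'I_N -> R) (lam : R -> nat -> nat) : Prop :=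
  is_solution E T r xi dom tau lam /\
  ~ (exists dom' tau' lam',
       is_solution E T r xi dom' tau' lam' /\
       (forall t k, dom t k -> dom' t k) /\
       (exists t k, dom' t k /\ ~ dom t k) /\
       (forall t k, dom t k -> (forall j, tau' t k j = tau t k j) /\ lam' t k = lam t k)).

Definition in_As (N : nat) (tau : 'I_N -> R) : Prop :=
  (exists mu, 0 <= mu <= 1 /\ forall i, tau i = mu) \/
  (forall i, tau i = 0 \/ tau i = 1).

(* Main.v *)
Require Import Defs.
From Stdlib Require Import Reals.
From mathcomp Require Import all_boot.
From Stdlib Require Import Lra Lia Classical ClassicalEpsilon FunctionalExtensionality.
From mathcomp Require Import zify.
Local Open Scope R_scope.
Set Implicit Arguments.
Unset Strict Implicit.
From HB Require Import structures.
Lemma Rplus_0_l' : left_id 0 Rplus. Proof. move=> x; ring. Qed.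
Lemma Rplus_assoc' : associative Rplus. Proof. move=> x y z; ring. Qed.
Lemma Rplus_comm' : commutative Rplus. Proof. move=> x y; ring. Qed.
HB.instance Definition _ := Monoid.isComLaw.Build R 0 Rplus Rplus_assoc' Rplus_comm' Rplus_0_l'.
Lemma bigR_recr n (F : 'I_n.+1 -> R) :
  \big[Rplus/0]_(i < n.+1) F i = \big[Rplus/0]_(i < n) F (widen_ord (leqnSn n) i) + F ord_max.
Proof. by rewrite big_ord_recr. Qed.
Lemma bigR_recl n (F : 'I_n.+1 -> R) :
  \big[Rplus/0]_(i < n.+1) F i = F ord0 + \big[Rplus/0]_(i < n) F (lift ord0 i).
Proof. by rewrite big_ord_recl. Qed.
Lemma bigR0 (F : 'I_0 -> R) : \big[Rplus/0]_(i < 0) F i = 0.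
Proof. by rewrite big_ord0. Qed.
Ltac slra := repeat match goal with |- _ /\ _ => split end; lra.

Ltac mm := unfold Rmin, Rmax in *; repeat match goal with
  | |- context[Rle_dec ?a ?b] => destruct (Rle_dec a b)
  | H : context[Rle_dec ?a ?b] |- _ => destruct (Rle_dec a b)
  end.

Definition piece := (R * R * nat)%type.
Definition pu (p : piece) := p.1.1.
Definition pv (p : piece) := p.1.2.
Definition pn (p : piece) := p.2.
Definition p0 : piece := (0, 0, 0%N).

Fixpoint okr (lo hi : R) (L : seq piece) : Prop :=
  match L with
  | [::] => lo <= hi
  | p :: L' => pu p <= pv p <= hi /\ okr lo (pu p) L'
  end.

Fixpoint lsum (g : piece -> R) (L : seq piece) : R :=
  match L with [::] => 0 | p :: L' => g p + lsum g L' end.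

Fixpoint allP (Q : piece -> Prop) (L : seq piece) : Prop :=
  match L with [::] => True | p :: L' => Q p /\ allP Q L' end.

Definition len (p : piece) := pv p - pu p.

Lemma okr_le lo hi L : okr lo hi L -> lo <= hi.
Proof.
  elim: L hi => [|p L IH] hi /=; first by [].
  move=> [H1 H2]; have := IH _ H2; lra.
Qed.

Lemma okr_mono lo hi hi' L : okr lo hi L -> hi <= hi' -> okr lo hi' L.
Proof.
  case: L => [|p L] /=; first lra.
  move=> [H1 H2] H; split; [lra|exact H2].
Qed.

Lemma okr_nth lo hi L i : okr lo hi L -> (i < size L)%N ->
  lo <= pu (nth p0 L i) /\ pu (nth p0 L i) <= pv (nth p0 L i) /\ pv (nth p0 L i) <= hi.
Proof.
  elim: L hi i => [|p L IH] hi i //=.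
  move=> [H1 H2]; case: i => [|i] /= Hi.
  - have := okr_le H2; lra.
  - have := IH _ i H2 Hi; lra.
Qed.

Lemma okr_order lo hi L i j : okr lo hi L -> (i < j)%N -> (j < size L)%N ->
  pv (nth p0 L j) <= pu (nth p0 L i).
Proof.
  elim: L hi i j => [|p L IH] hi i j //=.
  move=> [H1 H2]; case: j => [|j] //; case: i => [|i] /= Hij Hj.
  - have := okr_nth H2 Hj; lra.
  - by apply: (IH (pu p))...
Qed.

Lemma okr_filter (P : pred piece) lo hi L : okr lo hi L -> okr lo hi (filter P L).
Proof.
  elim: L hi => [|p L IH] hi //=.
  move=> [H1 H2]; case: (P p) => /=.
  - split; [lra| exact: IH].
  - apply: IH; apply: okr_mono H2 _; lra.
Qed.

Lemma lsum_filter g (P : pred piece) L :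
  lsum g L = lsum g (filter P L) + lsum g (filter (predC P) L).
Proof.
  elim: L => [|p L IH] /=; first lra.
  case: (P p) => /=; rewrite IH; lra.
Qed.

Lemma allP_filter Q (P : pred piece) L : allP Q L -> allP (fun p => Q p /\ P p) (filter P L).
Proof.
  elim: L => [|p L IH] //= [H1 H2].
  case E: (P p) => /=; last by apply: IH.
  split; [split;[exact H1|by []]| exact: IH].
Qed.

Lemma allP_impl (Q Q' : piece -> Prop) L : (forall p, Q p -> Q' p) -> allP Q L -> allP Q' L.
Proof. move=> H; elim: L => [|p L IH] //= [H1 H2]; split; auto. Qed.

Lemma okr_inside a b lo hi L : okr lo hi L -> allP (fun p => a <= pu p /\ pv p <= b) L ->
  lsum len L <= Rmax 0 (Rmin hi b - a).
Proof.
  elim: L hi => [|p L IH] hi /=.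
  - move=> _ _; mm; lra.
  - move=> [H1 H2] [[H3 H4] H5].
    have := IH _ H2 H5; rewrite /len; mm; lra.
Qed.

Lemma cover_sum (a b : nat -> R) (Hab : forall n, a n <= b n) M lo hi L :
  okr lo hi L -> allP (fun p => (pn p < M)%N /\ a (pn p) <= pu p /\ pv p <= b (pn p)) L ->
  lsum len L <= \big[Rplus/0]_(n < M) (b n - a n).
Proof.
  elim: M L => [|M IH] L HL HA.
  - rewrite bigR0; case: L HL HA => [|p L] /=; first lra.
    by move=> _ [[H _] _].
  - rewrite bigR_recr /= (lsum_filter len (fun p => pn p == M)).
    have H1 := okr_inside (a := a M) (b := b M) (okr_filter (fun p => pn p == M) HL).
    have H2 : allP (fun p => a M <= pu p /\ pv p <= b M) (filter (fun p => pn p == M) L).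
      apply: allP_impl (allP_filter (fun p => pn p == M) HA).
      by move=> p [[_ [Ha Hb]] /eqP <-].
    have H3 := H1 H2.
    have H4 : lsum len (filter (predC (fun p => pn p == M)) L) <=
              \big[Rplus/0]_(i < M) (b i - a i).
      apply: IH; first exact: okr_filter.
      apply: allP_impl (allP_filter _ HA).
      move=> p [[Hn Hr] /= Hne]; split; last exact Hr.
      rewrite ltnS leq_eqVlt in Hn; case/orP: Hn => // Hn; by rewrite Hn in Hne.
    have H5 : lsum len (filter (fun p => pn p == M) L) <= b M - a M.
      have := Hab M; move: H3; mm; intros; lra.
    rewrite [X in X <= _]Rplus_comm; apply: Rplus_le_compat; [exact H4|exact H5].
Qed.

Lemma big_nth_lsum g L :
  \big[Rplus/0]_(i < size L) g (nth p0 L i) = lsum g L.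
Proof.
  elim: L => [|p L IH] /=; first by rewrite bigR0.
  by rewrite bigR_recl /= IH.
Qed.

Lemma lsum_plus g1 g2 L : lsum (fun p => g1 p + g2 p) L = lsum g1 L + lsum g2 L.
Proof. elim: L => [|p L IH] /=; lra. Qed.

Lemma lsum_scal k g L : lsum (fun p => k * g p) L = k * lsum g L.
Proof. elim: L => [|p L IH] /=; [lra| rewrite IH; lra]. Qed.

Lemma allP_bound Q L : allP Q L -> exists M, allP (fun p => Q p /\ (pn p < M)%N) L.
Proof.
  elim: L => [|p L IH] /=; first by exists 0%N.
  move=> [Hp HL]; have [M HM] := IH HL.
  exists (maxn M (pn p)).+1; split.
  - split; first exact Hp. lia.
  - apply: allP_impl HM => q [Hq Hn]; split; first exact Hq. lia.
Qed.

Lemma zero_of_small X K : 0 < K -> (forall e, 0 < e -> Rabs X <= e * K) -> X = 0.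
Proof.
  move=> HK H; apply: NNPP => HX.
  have HX' : 0 < Rabs X by apply: Rabs_pos_lt.
  have := H (Rabs X / (2 * K)) ltac:(apply: Rdiv_lt_0_compat; lra).
  have -> : Rabs X / (2 * K) * K = Rabs X / 2 by field; lra.
  lra.
Qed.

Lemma deriv_bound f s m e : derivable_pt_lim f s m -> 0 < e ->
  exists del, 0 < del /\ forall z, Rabs (z - s) < del -> Rabs (f z - f s - m * (z - s)) <= e * Rabs (z - s).
Proof.
  move=> Hd He; have [del Hdel] := Hd e He.
  exists del; split; first exact: cond_pos.
  move=> z Hz; case: (Req_dec (z - s) 0) => Hzs.
  - have -> : z = s by lra.
    rewrite Rminus_diag; split_Rabs; lra.
  - have := Hdel (z - s) Hzs Hz.
    have -> : s + (z - s) = z by ring.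
    move=> H.
    have -> : f z - f s - m * (z - s) = ((f z - f s) / (z - s) - m) * (z - s) by field.
    rewrite Rabs_mult; apply: Rmult_le_compat_r; [apply: Rabs_pos| lra].
Qed.

Lemma ac_deriv f c d m (Z : R -> Prop) : c <= d -> abs_cont_on f c d -> null_set Z ->
  (forall u, c <= u <= d -> ~ Z u -> derivable_pt_lim f u m) -> f d - f c = m * (d - c).
Proof.
  move=> Hcd Hac Hnull Hder.
  suff H : forall e, 0 < e -> Rabs (f d - f c - m * (d - c)) <= e * (d - c + 1 + Rabs m).
    have := zero_of_small (K := d - c + 1 + Rabs m) ltac:(have := Rabs_pos m; lra) H; lra.
  move=> e He.
  have [delta [Hdelta Hac']] := Hac e He.
  have [a [b [Hab [Hcov Hsum]]]] := Hnull (Rmin delta e) ltac:(mm; lra).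
  pose G := fun p : piece => Rabs (f (pv p) - f (pu p)) + Rabs m * (pv p - pu p).
  pose P := fun x => exists L, okr c x L /\
     allP (fun p => a (pn p) < pu p /\ pv p < b (pn p)) L /\
     Rabs (f x - f c - m * (x - c)) <= e * (x - c) + lsum G L.
  have Pd : P d.
  { pose S := fun x => c <= x <= d /\ P x.
    have Sc : S c.
    { split; first lra. exists [::]; rewrite /=; split; first lra; split; first by [].
      rewrite Rminus_diag; split_Rabs; lra. }
    have Sb : bound S by exists d => x [[_ Hx] _].
    have [s [Hub Hlub]] := completeness S Sb (ex_intro _ c Sc).
    have Hcs : c <= s by apply: Hub.
    have Hsd : s <= d by apply: Hlub => x [[_ Hx] _].
    have [del [Hdel Hloc]] : exists del, 0 < del /\ forall y z, y <= s <= z ->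
         Rabs (y - s) < del -> Rabs (z - s) < del -> P y -> P z.
    { case: (classic (Z s)) => HZ.
      - have [n Hn] := Hcov s HZ.
        exists (Rmin (s - a n) (b n - s)); split; first by (mm; lra).
        move=> y z Hyz Hy Hz [L [HL1 [HL2 HL3]]].
        exists ((y, z, n) :: L); split.
        { rewrite /= /pu /pv /=; split; first lra. exact HL1. }
        split.
        { rewrite /= /pu /pv /pn /=; split; last exact HL2.
          move: Hy Hz; mm; split_Rabs; lra. }
        have -> : lsum G ((y, z, n) :: L) = Rabs (f z - f y) + Rabs m * (z - y) + lsum G L by [].
        have T1 := Rabs_triang (f y - f c - m * (y - c)) (f z - f y - m * (z - y)).
        have T2 := Rabs_triang (f z - f y) (- (m * (z - y))).
        have T3 : Rabs (- (m * (z - y))) = Rabs m * (z - y).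
          by rewrite Rabs_Ropp Rabs_mult (Rabs_right (z - y)); [|lra].
        have -> : f z - f c - m * (z - c) = (f y - f c - m * (y - c)) + (f z - f y - m * (z - y)) by ring.
        have -> : f z - f y - m * (z - y) = (f z - f y) + - (m * (z - y)) by ring.
        move: T1; rewrite (_ : f z - f y - m * (z - y) = (f z - f y) + - (m * (z - y))); last ring.
        intros; have : e * (y - c) <= e * (z - c) by apply: Rmult_le_compat_l; lra.
        lra.
      - have [del [Hdel Hd]] := deriv_bound (Hder s (conj Hcs Hsd) HZ) He.
        exists del; split; first exact Hdel.
        move=> y z Hyz Hy Hz [L [HL1 [HL2 HL3]]].
        exists L; split; first (apply: okr_mono HL1 _; lra).
        split; first exact HL2.
        have D1 := Hd y Hy. have D2 := Hd z Hz.
        have T1 := Rabs_triang (f y - f c - m * (y - c)) ((f z - f s - m * (z - s)) - (f y - f s - m * (y - s))).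
        have T2 : Rabs (f z - f s - m * (z - s) - (f y - f s - m * (y - s))) <= Rabs (f z - f s - m * (z - s)) + Rabs (f y - f s - m * (y - s)) by split_Rabs; lra.
        have -> : f z - f c - m * (z - c) = (f y - f c - m * (y - c)) + ((f z - f s - m * (z - s)) - (f y - f s - m * (y - s))) by ring.
        move: D1 D2; rewrite (Rabs_left1 (y - s)); last lra.
        rewrite (Rabs_right (z - s)); last lra.
        move=> D1 D2; lra. }
    have [y [Sy Hy]] : exists y, S y /\ s - del < y.
    { apply: NNPP => Hn.
      have : s <= s - del.
      { apply: Hlub => x Sx. apply: Rnot_lt_le => Hx. apply: Hn. by exists x. }
      lra. }
    have Hys : y <= s by apply: Hub.
    pose z := Rmin (s + del / 2) d.
    have Pz : P z.
    { apply: (Hloc y z); [rewrite /z; mm; lra | split_Rabs; lra | rewrite /z; mm; split_Rabs; lra | exact Sy.2]. }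
    have Sz : S z by split; [rewrite /z; mm; lra | exact Pz].
    have Hzs := Hub z Sz.
    have Hzd : z = d by move: Hzs; rewrite /z; mm; intros; lra.
    by rewrite -Hzd. }
  have [L [HL1 [HL2 HL3]]] := Pd.
  have [M HM] := allP_bound HL2.
  have Hlen : lsum len L <= \big[Rplus/0]_(n < M) (b n - a n).
  { apply: (cover_sum Hab HL1); apply: allP_impl HM => p [[H1 H2] H3]; split; first exact H3.
    have := okr_nth; lra. }
  have Hlen' : lsum len L < Rmin delta e by have := Hsum M; lra.
  have Hvar : lsum (fun p => Rabs (f (pv p) - f (pu p))) L < e.
  { rewrite -big_nth_lsum.
    apply: (Hac' (size L) (fun i => pu (nth p0 L i)) (fun i => pv (nth p0 L i))).
    - move=> i Hi; have := okr_nth HL1 Hi; lra.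
    - move=> i j Hi Hj Hij; case: (ltngtP i j) => H.
      + right; exact: okr_order HL1 H Hj.
      + left; exact: okr_order HL1 H Hi.
      + by subst.
    - rewrite (big_nth_lsum len); move: Hlen'; mm; lra. }
  have HG : lsum G L = lsum (fun p => Rabs (f (pv p) - f (pu p))) L + Rabs m * lsum len L.
    by rewrite /G lsum_plus lsum_scal.
  have Hm := Rabs_pos m.
  have Hl0 : 0 <= lsum len L.
  { clear -HL1. elim: L d HL1 => [|p L IH] d /=; first lra.
    move=> [H1 H2]; have := IH _ H2; rewrite /len; lra. }
  have : Rabs m * lsum len L <= Rabs m * e.
    apply: Rmult_le_compat_l => //; move: Hlen'; mm; lra.
  lra.
Qed.

Definition Jrel (N : nat) (r : 'I_N -> R) (phi : rel 'I_N) (i : 'I_N) (tau g : 'I_N -> R) : Prop :=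
  tau i = 1 /\ g i = 0 /\ forall j, j <> i ->
    (phi i j -> (g j = 0 \/ g j = 1) /\ (tau j < r j -> g j = 0) /\ (r j < tau j -> g j = 1)) /\
    (~~ phi i j -> g j = tau j).

Lemma close_eq x y : (forall eps, 0 < eps -> Rabs (x - y) < eps) -> x = y.
Proof.
  move=> H; apply: NNPP => Hne.
  have Hp : 0 < Rabs (x - y) by apply: Rabs_pos_lt; lra.
  have := H _ Hp; lra.
Qed.

Lemma close_eq' x y e0 : 0 < e0 -> (forall eps, 0 < eps -> eps <= e0 -> Rabs (x - y) < eps) -> x = y.
Proof.
  move=> He0 H; apply: close_eq => eps Heps.
  have := H (Rmin eps e0) ltac:(unfold Rmin; destruct Rle_dec; lra) ltac:(unfold Rmin; destruct Rle_dec; lra).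
  unfold Rmin; destruct Rle_dec; lra.
Qed.

Definition G0at (N : nat) (r : 'I_N -> R) (phi : rel 'I_N) (i : 'I_N) (tau' g' : 'I_N -> R) : Prop :=
  tau' i = 1 /\ g' i = 0 /\ forall j, j <> i -> Defs.Rset r phi i j tau' (g' j).

Definition closeF (N : nat) (eps : R) (tau g tau' g' : 'I_N -> R) : Prop :=
  forall j, Rabs (tau' j - tau j) < eps /\ Rabs (g' j - g j) < eps.

Lemma approx_Jrel N (r : 'I_N -> R) phi i tau g :
  (forall eps, 0 < eps -> exists tau' g', closeF eps tau g tau' g' /\ G0at r phi i tau' g') ->
  Jrel r phi i tau g.
Proof.
  move=> H.
  split.
  { apply: close_eq => eps Heps. have [tau' [g' [Hc [H1 _]]]] := H _ Heps.
    have [Ht _] := Hc i; rewrite H1 in Ht; split_Rabs; lra. }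
  split.
  { apply: close_eq => eps Heps. have [tau' [g' [Hc [_ [H1 _]]]]] := H _ Heps.
    have [_ Hg] := Hc i; rewrite H1 in Hg; split_Rabs; lra. }
  move=> j Hji; split.
  - move=> Hphi; split; [|split].
    + apply: NNPP => Hn.
      have Hg0 : g j <> 0 by move=> E; apply: Hn; left.
      have Hg1 : g j <> 1 by move=> E; apply: Hn; right.
      have He : 0 < Rmin (Rabs (g j)) (Rabs (g j - 1)).
        unfold Rmin; destruct Rle_dec; apply: Rabs_pos_lt; lra.
      have [tau' [g' [Hc [_ [_ HR]]]]] := H _ He.
      have := HR j Hji; rewrite /Defs.Rset Hphi => HR'.
      have [_ Hg] := Hc j.
      have Hg' : g' j = 0 \/ g' j = 1 by lra.
      move: Hg He; unfold Rmin; destruct Rle_dec; case: Hg' => ->; split_Rabs; lra.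
    + move=> Hlt; apply: (close_eq' (e0 := r j - tau j)); first lra.
      move=> eps Heps Hle.
      have [tau' [g' [Hc [_ [_ HR]]]]] := H _ Heps.
      have := HR j Hji; rewrite /Defs.Rset Hphi => HR'.
      have [Ht Hg] := Hc j.
      have Htr : tau' j < r j by move: Ht; split_Rabs; lra.
      have Hg0 : g' j = 0 by lra.
      rewrite Hg0 in Hg; split_Rabs; lra.
    + move=> Hlt; apply: (close_eq' (e0 := tau j - r j)); first lra.
      move=> eps Heps Hle.
      have [tau' [g' [Hc [_ [_ HR]]]]] := H _ Heps.
      have := HR j Hji; rewrite /Defs.Rset Hphi => HR'.
      have [Ht Hg] := Hc j.
      have Htr : r j < tau' j by move: Ht; split_Rabs; lra.
      have Hg0 : g' j = 1 by lra.
      rewrite Hg0 in Hg; split_Rabs; lra.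
  - move=> Hphi; apply: close_eq => eps Heps.
    have [tau' [g' [Hc [_ [_ HR]]]]] := H (eps / 2) ltac:(lra).
    have := HR j Hji; rewrite /Defs.Rset (negbTE Hphi) => HR'.
    have [Ht Hg] := Hc j; rewrite HR' in Hg; split_Rabs; lra.
Qed.

Lemma fin_min N (Q : 'I_N -> R -> Prop) :
  (forall i, exists e, 0 < e /\ Q i e) ->
  exists e, 0 < e /\ forall i, exists ei, e <= ei /\ Q i ei.
Proof.
  move=> H.
  suff : forall s : seq 'I_N, exists e, 0 < e /\ forall i, i \in s -> exists ei, e <= ei /\ Q i ei.
    move=> /(_ (enum 'I_N)) [e [He Hs]]; exists e; split => // i; apply: Hs; by rewrite mem_enum.
  elim => [|x s [e [He Hs]]].
  - exists 1; split; [lra| by []].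
  - have [ex [Hex Qx]] := H x.
    exists (Rmin e ex); split; first (unfold Rmin; destruct Rle_dec; lra).
    move=> i; rewrite in_cons => /orP [/eqP -> | Hi].
    + exists ex; split; last exact Qx. unfold Rmin; destruct Rle_dec; lra.
    + have [ei [Hei Qi]] := Hs i Hi; exists ei; split; last exact Qi.
      unfold Rmin; destruct Rle_dec; lra.
Qed.

Lemma Gjump_Jrel N (r : 'I_N -> R) phi tau g : Gjump r phi tau g -> exists i, Jrel r phi i tau g.
Proof.
  move=> HG; apply: NNPP => Hn.
  have H1 : forall i, exists e, 0 < e /\ forall tau' g', closeF e tau g tau' g' -> ~ G0at r phi i tau' g'.
  { move=> i; apply: NNPP => Hi; apply: Hn; exists i; apply: approx_Jrel => eps Heps.
    apply: NNPP => Hne; apply: Hi; exists eps; split => // tau' g' Hc HG0.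
    apply: Hne; exists tau', g'; split; assumption. }
  have [e [He Hall]] := fin_min H1.
  have [tau' [g' [Hc [_ [i [Hi1 [Hi2 Hi3]]]]]]] := HG e He.
  have [ei [Hei Qi]] := Hall i.
  apply: (Qi tau' g').
  - move=> j; have [A B] := Hc j; split; lra.
  - split; [exact Hi1| split; [exact Hi2| exact Hi3]].
Qed.

Lemma null_mono (S S' : R -> Prop) : null_set S -> (forall x, S' x -> S x) -> null_set S'.
Proof.
  move=> H Hs eps Heps; have [a [b [H1 [H2 H3]]]] := H eps Heps.
  exists a, b; split; [exact H1| split; [move=> x /Hs; exact: H2| exact H3]].
Qed.

Lemma div_le_inv x c T : 0 < T -> x / T <= c -> x <= c * T.
Proof.
  move=> HT H; have -> : x = (x / T) * T by field; lra.
  apply: Rmult_le_compat_r; lra.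
Qed.

Lemma argmax N (f : 'I_N -> R) : (0 < N)%N -> exists j0, forall j, f j <= f j0.
Proof.
  move=> HN.
  have x0 : 'I_N := Ordinal HN.
  suff : forall s : seq 'I_N, exists j0, forall j, j \in x0 :: s -> f j <= f j0.
    move=> /(_ (enum 'I_N)) [j0 Hj0]; exists j0 => j; apply: Hj0.
    by rewrite in_cons mem_enum orbT.
  elim=> [|x s [j0 Hj0]].
  - exists x0 => j; rewrite inE => /eqP ->; lra.
  - case: (Rle_dec (f x) (f j0)) => Hx.
    + exists j0 => j; rewrite !in_cons => /orP [Hj|/orP [/eqP ->|Hj]].
      * apply: Hj0; by rewrite in_cons Hj.
      * exact Hx.
      * apply: Hj0; by rewrite in_cons Hj orbT.
    + exists x => j; rewrite !in_cons => /orP [Hj|/orP [/eqP ->|Hj]].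
      * have := Hj0 j; rewrite in_cons Hj => /(_ isT); lra.
      * lra.
      * have := Hj0 j; rewrite in_cons Hj orbT => /(_ isT); lra.
Qed.

Lemma max_index (P : nat -> Prop) K : (exists k, P k) -> (forall k, P k -> (k < K)%N) ->
  exists J, P J /\ forall k, P k -> (k <= J)%N.
Proof.
  elim: K => [|K IH] Hex Hb.
  - have [k Hk] := Hex; have := Hb k Hk; lia.
  - case: (classic (P K)) => HK.
    + exists K; split => // k Hk; have := Hb k Hk; lia.
    + apply: IH => // k Hk; have := Hb k Hk; case: (eqVneq k K) => [E|Hne]; first by subst.
      lia.
Qed.


Lemma Jrel_cube N (r : 'I_N -> R) phi i tau g :
  in_unit_cube tau -> Jrel r phi i tau g -> in_unit_cube g.
Proof.
  move=> Hc [H1 [H2 H3]] j.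
  case: (eqVneq j i) => [->|/eqP Hji]; first (rewrite H2; lra).
  have [Ha Hb] := H3 j Hji.
  case E: (phi i j).
  - have [[->|->] _] := Ha E; lra.
  - rewrite Hb; [exact: Hc| by rewrite E].
Qed.

Lemma div_pos x T : 0 < x -> 0 < T -> 0 < x / T.
Proof. move=> Hx HT; apply: Rdiv_lt_0_compat => //. Qed.

Lemma div_nonneg x T : 0 <= x -> 0 < T -> 0 <= x / T.
Proof. move=> Hx HT; apply: Rmult_le_pos => //; left; apply: Rinv_0_lt_compat => //. Qed.

Lemma div_le_mono x y T : x <= y -> 0 < T -> x / T <= y / T.
Proof. move=> Hx HT; apply: Rmult_le_compat_r => //; left; apply: Rinv_0_lt_compat => //. Qed.

Lemma div_lt_mono x y T : x < y -> 0 < T -> x / T < y / T.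
Proof. move=> Hx HT; apply: Rmult_lt_compat_r => //; apply: Rinv_0_lt_compat => //. Qed.

Lemma lin_lim_lo a b y T : 0 < T -> a < b ->
  (forall t, a < t < b -> 0 <= y + (t - a) / T) -> 0 <= y.
Proof.
  move=> HT Hab H; apply: Rnot_lt_le => Hy.
  pose u := Rmin ((b - a) / 2) (- y * T / 2).
  have Hu : 0 < u by rewrite /u; unfold Rmin; destruct Rle_dec;
    [apply: div_pos; lra| have := Rmult_lt_0_compat (-y) T ltac:(lra) HT; lra].
  have Hu1 : u <= (b - a) / 2 by rewrite /u; unfold Rmin; destruct Rle_dec; lra.
  have Hu2 : u <= - y * T / 2 by rewrite /u; unfold Rmin; destruct Rle_dec; lra.
  have := H (a + u) ltac:(lra).
  have -> : (a + u - a) / T = u / T by congr (_ / _); ring.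
  have : u / T <= (- y * T / 2) / T by apply: div_le_mono.
  have -> : (- y * T / 2) / T = - y / 2 by field; lra.
  lra.
Qed.

Lemma lin_lim_hi a b y T : 0 < T -> a < b ->
  (forall t, a < t < b -> y + (t - a) / T <= 1) -> y + (b - a) / T <= 1.
Proof.
  move=> HT Hab H; apply: Rnot_lt_le => Hy.
  pose e := y + (b - a) / T - 1.
  pose u := Rmin ((b - a) / 2) (e * T / 2).
  have He : 0 < e by rewrite /e; lra.
  have Hu : 0 < u by rewrite /u; unfold Rmin; destruct Rle_dec;
    [apply: div_pos; lra| have := Rmult_lt_0_compat e T He HT; lra].
  have Hu1 : u <= (b - a) / 2 by rewrite /u; unfold Rmin; destruct Rle_dec; lra.
  have Hu2 : u <= e * T / 2 by rewrite /u; unfold Rmin; destruct Rle_dec; lra.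
  have := H (b - u) ltac:(lra).
  have -> : (b - u - a) / T = (b - a) / T - u / T by field; lra.
  have : u / T <= (e * T / 2) / T by apply: div_le_mono.
  have -> : (e * T / 2) / T = e / 2 by field; lra.
  rewrite /e; lra.
Qed.

Lemma lin_deriv y a T t : 0 < T -> derivable_pt_lim (fun s => y + (s - a) / T) t (/ T).
Proof.
  move=> HT eps Heps; exists (mkposreal 1 Rlt_0_1) => h Hh _.
  have -> : (y + (t + h - a) / T - (y + (t - a) / T)) / h - / T = 0 by field; lra.
  rewrite Rabs_R0; lra.
Qed.

Lemma const_deriv (y t : R) : derivable_pt_lim (fun _ => y) t 0.
Proof. exact: derivable_pt_lim_const. Qed.

Lemma big_div n (F : 'I_n -> R) T :
  \big[Rplus/0]_(i < n) (F i / T) = (\big[Rplus/0]_(i < n) F i) / T.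
Proof.
  elim: n F => [|n IH] F; first by rewrite !bigR0 /Rdiv Rmult_0_l.
  rewrite !bigR_recr (IH (fun i => F (widen_ord (leqnSn n) i))) /Rdiv; ring.
Qed.

Lemma lin_ac y a T c d : 0 < T -> abs_cont_on (fun s => y + (s - a) / T) c d.
Proof.
  move=> HT eps Heps; exists (eps * T); split; first by apply: Rmult_lt_0_compat.
  move=> n A B H1 H2 H3.
  rewrite (eq_bigr (fun i : 'I_n => (B i - A i) / T)); last first.
  { move=> i _; have [Ha Hb] := H1 i (ltn_ord i).
    have -> : y + (B i - a) / T - (y + (A i - a) / T) = (B i - A i) / T by field; lra.
    apply: Rabs_right; apply: Rle_ge; apply: div_nonneg; lra. }
  rewrite big_div.
  have -> : eps = (eps * T) / T by field; lra.
  by apply: div_lt_mono.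
Qed.

Lemma const_ac y c d : abs_cont_on (fun _ => y) c d.
Proof.
  move=> eps Heps; exists 1; split; first lra.
  move=> n A B _ _ _.
  rewrite big1; first lra.
  move=> i _; rewrite Rminus_diag Rabs_R0 //.
Qed.

Lemma ts_mono (ts : nat -> R) J (Hm : forall k, (k <= J)%N -> ts k <= ts k.+1) :
  forall i j, (i <= j)%N -> (j <= J.+1)%N -> ts i <= ts j.
Proof.
  move=> i; elim=> [|j IH] Hij HjJ.
  - have -> : i = 0%N by lia. lra.
  - case: (eqVneq i j.+1) => [->|Hne]; first lra.
    have := IH ltac:(lia) ltac:(lia); have := Hm j ltac:(lia); lra.
Qed.

Definition std_dom (ts : nat -> R) (J : nat) (e : R) (t : R) (k : nat) : Prop :=
  ((k < J)%N /\ ts k <= t <= ts k.+1) \/ (k = J /\ ts J <= t <= e).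

Lemma mono_lt (ts : nat -> R) J (Hm : forall k, (k < J)%N -> ts k <= ts k.+1) :
  forall i j, (i <= j)%N -> (j <= J)%N -> ts i <= ts j.
Proof.
  move=> i; elim=> [|j IH] Hij HjJ.
  - have -> : i = 0%N by lia. lra.
  - case: (eqVneq i j.+1) => [->|Hne]; first lra.
    have := IH ltac:(lia) ltac:(lia); have := Hm j ltac:(lia); lra.
Qed.

Lemma std_htd ts J e : ts 0%N = 0 -> (forall k, (k < J)%N -> ts k <= ts k.+1) -> ts J <= e ->
  hybrid_time_domain (std_dom ts J e).
Proof.
  move=> H0 Hm HJe.
  have Mono := mono_lt Hm.
  split.
  { move=> t k [[Hk Ht]|[Ek Ht]].
    - have := Mono 0%N k ltac:(lia) ltac:(lia); lra.
    - subst k; have := Mono 0%N J ltac:(lia) ltac:(lia); lra. }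
  move=> T0 J0 HT0.
  have HJ0 : (J0 <= J)%N by case: HT0 => [[H _]|[EJ _]]; [lia| subst; lia].
  have HtsT0 : ts J0 <= T0 by case: HT0 => [[_ H]|[EJ H]]; [lra| subst; lra].
  exists (fun k => if k == J0.+1 then T0 else ts k).
  split; first by [].
  split.
  { move=> k Hk; case: (eqVneq k J0) => [->|Hne].
    - rewrite eqxx (_ : (J0 == J0.+1) = false); [lra| by apply/eqP; lia].
    - rewrite (_ : (k == J0.+1) = false); last by apply/eqP; lia.
      rewrite (_ : (k.+1 == J0.+1) = false); last by apply/eqP; lia.
      apply: Hm; lia. }
  move=> t k; split.
  - move=> [Hd [Ht Hk]]; split; first exact Hk.
    rewrite (_ : (k == J0.+1) = false); last by apply/eqP; lia.
    case: (eqVneq k J0) => [Ek|Hne].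
    + subst k; rewrite eqxx.
      case: Hd => [[_ H]|[EJ H]]; [|subst]; split; lra.
    + rewrite (_ : (k.+1 == J0.+1) = false); last by apply/eqP; lia.
      case: Hd => [[_ H]|[Ek H]]; first slra. lia.
  - move=> [Hk Ht]; move: Ht.
    rewrite (_ : (k == J0.+1) = false); last by apply/eqP; lia.
    case: (eqVneq k J0) => [Ek|Hne].
    + subst k; rewrite eqxx => Ht; split; last (split; [lra| by []]).
      case: HT0 => [[HJ H]|[EJ H]].
      * left; split; [exact HJ| slra].
      * right; split; [exact EJ| subst; slra].
    + rewrite (_ : (k.+1 == J0.+1) = false); last by apply/eqP; lia.
      move=> Ht; split; last split.
      * left; split; [lia| exact Ht].
      * have := Mono k.+1 J0 ltac:(lia) ltac:(lia); lra.
      * exact Hk.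
Qed.

Section Sol.
Variables (N : nat) (E : rel 'I_N) (T : R) (r : 'I_N -> R) (xi : nat -> rel 'I_N)
  (dom : R -> nat -> Prop) (tau : R -> nat -> 'I_N -> R) (lam : R -> nat -> nat).
Hypothesis HT : 0 < T.
Hypothesis Hsol : is_solution E T r xi dom tau lam.

Lemma flow k c d : c <= d -> (forall t, c <= t <= d -> dom t k) ->
  (forall j, tau d k j = tau c k j + (d - c) / T) /\ lam d k = lam c k.
Proof.
  move=> Hcd Hdom; case: Hsol => [_ [_ [_ [Hac [_ [Hnull _]]]]]].
  have [Hacj Hacl] := Hac k c d Hcd Hdom.
  have Hder : forall u, c <= u <= d ->
     ~ (dom u k /\ ~ ((forall j, derivable_pt_lim (fun s => tau s k j) u (/ T)) /\
        derivable_pt_lim (fun s => INR (lam s k)) u 0)) ->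
     (forall j, derivable_pt_lim (fun s => tau s k j) u (/ T)) /\
        derivable_pt_lim (fun s => INR (lam s k)) u 0.
  { move=> u Hu HZ; apply: NNPP => Hn; apply: HZ; split; [exact: Hdom| exact Hn]. }
  split.
  - move=> j.
    have := ac_deriv Hcd (Hacj j) (Hnull k) (fun u Hu HZ => (Hder u Hu HZ).1 j).
    rewrite /Rdiv; lra.
  - have := ac_deriv Hcd Hacl (Hnull k) (fun u Hu HZ => (Hder u Hu HZ).2).
    move=> H; apply: INR_eq; lra.
Qed.

Lemma interior_C k a b t : (forall s, a <= s <= b -> dom s k) -> a < t < b ->
  in_unit_cube (tau t k).
Proof.
  move=> Hdom Ht; case: Hsol => [_ [_ [_ [_ [HC _]]]]].
  apply: (HC t k); exists (Rmin (t - a) (b - t)); split; first (unfold Rmin; destruct Rle_dec; lra).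
  move=> s Hs; apply: Hdom; move: Hs; unfold Rmin; destruct Rle_dec; split_Rabs; lra.
Qed.

Lemma seg_cube k a b : a < b -> (forall s, a <= s <= b -> dom s k) ->
  in_unit_cube (tau a k) /\ in_unit_cube (tau b k).
Proof.
  move=> Hab Hdom.
  have Hlin : forall t, a <= t <= b -> forall j, tau t k j = tau a k j + (t - a) / T.
  { move=> t Ht; have [H _] := flow (k := k) (c := a) (d := t) ltac:(lra) (fun s Hs => Hdom s ltac:(lra)).
    exact H. }
  have Hint : forall j t, a < t < b -> 0 <= tau a k j + (t - a) / T <= 1.
  { move=> j t Ht; rewrite -Hlin; last lra. exact: (interior_C Hdom Ht j). }
  have Hpos : 0 <= (b - a) / T by apply: div_nonneg; lra.
  split => j.
  - have := lin_lim_lo HT Hab (fun t Ht => (Hint j t Ht).1).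
    have := lin_lim_hi HT Hab (fun t Ht => (Hint j t Ht).2).
    lra.
  - rewrite (Hlin b ltac:(lra)).
    have := lin_lim_lo HT Hab (fun t Ht => (Hint j t Ht).1).
    have := lin_lim_hi HT Hab (fun t Ht => (Hint j t Ht).2).
    lra.
Qed.

Lemma trunc T1 J1 : dom T1 J1 -> exists ts : nat -> R, ts 0%N = 0 /\ ts J1.+1 = T1 /\
  (forall k, (k <= J1)%N -> ts k <= ts k.+1) /\
  (forall t k, (k <= J1)%N -> ts k <= t <= ts k.+1 -> dom t k) /\
  (forall t k, dom t k -> t <= T1 -> (k <= J1)%N -> ts k <= t <= ts k.+1).
Proof.
  move=> HD; case: Hsol => [[_ Hh] _].
  have [ts [H0 [Hm Hiff]]] := Hh T1 J1 HD.
  have [_ [_ HT1]] := (Hiff T1 J1).1 (conj HD (conj (Rle_refl _) (leqnn _))).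
  have HT2 : ts J1.+1 <= T1.
  { have := (Hiff (ts J1.+1) J1).2 (conj (leqnn _) (conj (Hm J1 (leqnn _)) (Rle_refl _))).
    by move=> [_ [H _]]. }
  exists ts; split; first exact H0; split; first lra.
  split; first exact Hm.
  split.
  - move=> t k Hk Ht; exact: ((Hiff t k).2 (conj Hk Ht)).1.
  - move=> t k Hd Ht Hk; exact: ((Hiff t k).1 (conj Hd (conj Ht Hk))).2.
Qed.

Lemma order t k t' k' : dom t k -> dom t' k' -> (k < k')%N -> t <= t'.
Proof.
  move=> Hd Hd' Hkk.
  have [ts [H0 [HJ [Hm [Hdom Hin]]]]] := trunc Hd'.
  pose p := ts k.+1.
  have Hp : p <= t'.
  { rewrite -HJ; apply: (ts_mono Hm); lia. }
  have Hmk := Hm k ltac:(lia).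
  have Hmk1 := Hm k.+1 ltac:(lia).
  have Dp : dom p k by apply: Hdom; [lia| rewrite /p; lra].
  have Dp1 : dom p k.+1 by apply: Hdom; [lia| rewrite /p; lra].
  have HDp : in_D (tau p k) (lam p k).
  { case: Hsol => [_ [_ [_ [_ [_ [_ Hjump]]]]]]; exact: (Hjump p k Dp Dp1).1. }
  have [Hcube [j Hj]] := HDp.
  apply: Rnot_lt_le => Hlt.
  have [ts2 [_ [HJ2 [Hm2 [Hdom2 Hin2]]]]] := trunc Hd.
  have [Hp1 Hp2] := Hin2 p k Dp ltac:(lra) (leqnn k).
  have Hseg : forall s, p <= s <= t -> dom s k.
  { move=> s Hs; apply: (Hdom2 s k (leqnn k)); rewrite HJ2 in Hp2 *; lra. }
  pose m := (p + t) / 2.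
  have [Hf _] := flow (k := k) (c := p) (d := m) ltac:(rewrite /m; lra) (fun s Hs => Hseg s ltac:(rewrite /m in Hs; lra)).
  have Hc := interior_C Hseg (t := m) ltac:(rewrite /m; lra).
  have := Hc j; rewrite Hf Hj.
  have : 0 < (m - p) / T by apply: div_pos; rewrite /m; lra.
  lra.
Qed.

Hypothesis Hl0 : lam 0 0%N = 0%N.
Hypothesis Hc0 : in_unit_cube (tau 0 0%N).

Lemma chain T1 J1 : dom T1 J1 -> exists ts : nat -> R, ts 0%N = 0 /\ ts J1.+1 = T1 /\
  (forall k, (k <= J1)%N -> ts k <= ts k.+1) /\
  (forall t k, dom t k -> t <= T1 -> (k <= J1)%N -> ts k <= t <= ts k.+1) /\
  (forall k t, (k <= J1)%N -> ts k <= t <= ts k.+1 ->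
     dom t k /\ in_unit_cube (tau t k) /\ lam t k = k /\
     forall j, tau t k j = tau (ts k) k j + (t - ts k) / T) /\
  (forall k, (k < J1)%N -> exists i, Jrel r (xi k) i (tau (ts k.+1) k) (tau (ts k.+1) k.+1)).
Proof.
  move=> HD; have [ts [H0 [HJ [Hm [Hdom Hin]]]]] := trunc HD.
  have Hflow : forall k t, (k <= J1)%N -> ts k <= t <= ts k.+1 ->
     (forall j, tau t k j = tau (ts k) k j + (t - ts k) / T) /\ lam t k = lam (ts k) k.
  { move=> k t Hk Ht; apply: flow; first lra. move=> s Hs; apply: Hdom => //; lra. }
  have Hjmp : forall k, (k < J1)%N -> in_D (tau (ts k.+1) k) (lam (ts k.+1) k) /\
      Gjump r (xi (lam (ts k.+1) k)) (tau (ts k.+1) k) (tau (ts k.+1) k.+1) /\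
      lam (ts k.+1) k.+1 = (lam (ts k.+1) k).+1.
  { move=> k Hk; case: Hsol => [_ [_ [_ [_ [_ [_ Hj]]]]]]; apply: Hj.
    - apply: Hdom; [lia| have := Hm k ltac:(lia); lra].
    - apply: Hdom; [lia| have := Hm k.+1 ltac:(lia); lra]. }
  have Q : forall k, (k <= J1)%N -> lam (ts k) k = k /\ in_unit_cube (tau (ts k) k).
  { elim=> [|k IH] Hk; first by rewrite H0.
    have [IH1 IH2] := IH ltac:(lia).
    have [HDk [HG Hl]] := Hjmp k ltac:(lia).
    have Hlk : lam (ts k.+1) k = k.
    { have := Hm k ltac:(lia) => Hmk.
      have [_ ->] := Hflow k (ts k.+1) ltac:(lia) ltac:(lra); exact IH1. }
    rewrite Hlk in HG Hl; split; first exact Hl.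
    have [i Hi] := Gjump_Jrel HG.
    exact: (Jrel_cube HDk.1 Hi). }
  exists ts; split; first exact H0; split; first exact HJ; split; first exact Hm.
  split; first exact Hin.
  split.
  - move=> k t Hk Ht.
    have [Hf1 Hf2] := Hflow k t Hk Ht.
    have [Q1 Q2] := Q k Hk.
    split; first (apply: Hdom => //).
    split.
    + case: (Req_dec (ts k) (ts k.+1)) => Heq.
      * have -> : t = ts k by lra. exact Q2.
      * have [_ Cb] := seg_cube (k := k) (a := ts k) (b := ts k.+1) ltac:(lra)
           (fun s Hs => Hdom s k Hk Hs).
        have [Fb _] := Hflow k (ts k.+1) Hk ltac:(lra).
        move=> j; rewrite Hf1; have := Cb j; rewrite Fb; have := Q2 j.
        have : (t - ts k) / T <= (ts k.+1 - ts k) / T by apply: div_le_mono; lra.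
        have : 0 <= (t - ts k) / T by apply: div_nonneg; lra.
        lra.
    + split; first by rewrite Hf2.
      exact Hf1.
  - move=> k Hk.
    have [HDk [HG Hl]] := Hjmp k Hk.
    have [Q1 _] := Q k ltac:(lia).
    have Hlk : lam (ts k.+1) k = k.
    { have := Hm k ltac:(lia) => Hmk.
      have [_ ->] := Hflow k (ts k.+1) ltac:(lia) ltac:(lra); exact Q1. }
    rewrite Hlk in HG; exact: Gjump_Jrel HG.
Qed.



Hypothesis HN : (0 < N)%N.
Hypothesis Hnomax : ~ (exists dom' tau' lam',
       is_solution E T r xi dom' tau' lam' /\
       (forall t k, dom t k -> dom' t k) /\
       (exists t k, dom' t k /\ ~ dom t k) /\
       (forall t k, dom t k -> (forall j, tau' t k j = tau t k j) /\ lam' t k = lam t k)).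

Lemma reach K : exists t k, dom t k /\ (K <= k)%N.
Proof.
  apply: NNPP => Hn.
  have Hbound : forall t k, dom t k -> (k < K)%N.
  { move=> t k Hd; apply: NNPP => Hk; apply: Hn; exists t, k; split => //; lia. }
  have D00 : dom 0 0%N by case: Hsol => [_ [H _]].
  have [J [[t1 Ht1] HJmax]] := max_index (P := fun k => exists t, dom t k) (K := K)
     (ex_intro _ 0%N (ex_intro _ 0 D00)) (fun k '(ex_intro t Ht) => Hbound t k Ht).
  have F4 : forall t k, dom t k -> (k <= J)%N by move=> t k Hd; apply: HJmax; exists t.
  have [ts [H0 [HJ1 [Hm [Hin [Hch _]]]]]] := chain Ht1.
  pose a := ts J.
  pose y := tau a J.
  have HmJ := Hm J (leqnn J).
  have Da : dom a J by exact: (Hch J a (leqnn J) ltac:(rewrite /a; lra)).1.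
  have Ha1 : a <= t1 by rewrite /a -HJ1.
  have F1 : forall k t, (k < J)%N -> (dom t k <-> ts k <= t <= ts k.+1).
  { move=> k t Hk; split.
    - move=> Hd; apply: Hin => //; last lia.
      exact: order Hd Ht1 Hk.
    - move=> Ht; exact: (Hch k t ltac:(lia) Ht).1. }
  have F2 : forall t, dom t J -> a <= t /\ forall s, a <= s <= t ->
      dom s J /\ in_unit_cube (tau s J) /\ lam s J = J /\ forall j, tau s J j = y j + (s - a) / T.
  { move=> t Ht.
    have [ts2 [_ [HJ2 [Hm2 [Hin2 [Hch2 _]]]]]] := chain Ht.
    have HmJ2 := Hm2 J (leqnn J).
    have Dv : dom (ts2 J) J by exact: (Hch2 J (ts2 J) (leqnn J) ltac:(lra)).1.
    have Hv : ts2 J = a.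
    { case: (Rle_dec a t) => Hat.
      - have [Hva _] := Hin2 a J Da Hat (leqnn J).
        have [Hav _] := Hin (ts2 J) J Dv ltac:(lra) (leqnn J).
        rewrite /a in Hva Hav *; lra.
      - have [Hat' _] := Hin t J Ht ltac:(lra) (leqnn J).
        rewrite /a in Hat; lra. }
    split; first (rewrite -Hv; lra).
    move=> s Hs.
    have [D1 [D2 [D3 D4]]] := Hch2 J s (leqnn J) ltac:(rewrite Hv; lra).
    split; first exact D1; split; first exact D2; split; first exact D3.
    move=> j; rewrite D4 Hv //. }
  have Hy : in_unit_cube y.
  { have [_ Hs] := F2 a Da; have [_ [Hc _]] := Hs a ltac:(lra).
    exact Hc. }
  have [j0 Hj0] := argmax y HN.
  pose b' := a + T * (1 - y j0).
  have Hab' : a <= b'.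
  { have [Hy0 Hy1] := Hy j0; have := Rmult_le_pos T (1 - y j0) ltac:(lra) ltac:(lra); rewrite /b'; lra. }
  have Hdiv : (b' - a) / T = 1 - y j0 by rewrite /b'; field; lra.
  have Hb'bound : forall t, dom t J -> t <= b'.
  { move=> t Ht; have [Hat Hs] := F2 t Ht; have [_ [Hc [_ Hl]]] := Hs t ltac:(lra).
    have := Hc j0; rewrite Hl => Hc'.
    have := div_le_inv HT (x := t - a) (c := 1 - y j0) ltac:(lra).
    rewrite /b'; lra. }
  case: (classic (dom b' J)) => Hb'.
  - (* jump extension *)
    apply: Hnomax.
    have [Hab'2 Hsb] := F2 b' Hb'.
    pose x := tau b' J.
    have [_ [Hxc [Hxl Hxt]]] := Hsb b' ltac:(lra).
    have Hxj0 : x j0 = 1 by rewrite /x Hxt Hdiv; ring.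
    pose g := fun j => if j == j0 then 0 else if xi J j0 j then (if Rlt_dec (x j) (r j) then 0 else 1) else x j.
    pose ts' := fun k => if k == J.+1 then b' else ts k.
    have Ets : forall k, (k <= J)%N -> ts' k = ts k.
    { move=> k Hk; rewrite /ts' (_ : (k == J.+1) = false) //; apply/eqP; lia. }
    have EtsJ1 : ts' J.+1 = b' by rewrite /ts' eqxx.
    pose dom' := std_dom ts' J.+1 b'.
    pose tau' := fun t k j => if k == J.+1 then g j + (t - b') / T else tau t k j.
    pose lam' := fun t k => if k == J.+1 then J.+1 else lam t k.
    have Dsub : forall t k, dom t k -> dom' t k.
    { move=> t k Hd; have := F4 t k Hd; rewrite leq_eqVlt => /orP [/eqP Ek|Hk].
      - subst k; left; split => //; rewrite Ets // EtsJ1.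
        have [Hat _] := F2 t Hd; have Htb := Hb'bound t Hd; rewrite /a in Hat; slra.
      - left; split; first lia. rewrite !Ets; try lia. exact: (F1 k t Hk).1. }
    have Dback : forall t k, k <> J.+1 -> dom' t k -> dom t k.
    { move=> t k Hk [[Hk' Ht]|[Ek _]]; last by [].
      move: Hk'; rewrite ltnS leq_eqVlt => /orP [/eqP Ek|Hk'].
      - subst k; rewrite Ets // EtsJ1 in Ht. exact: (Hsb t ltac:(rewrite /a; lra)).1.
      - rewrite !Ets in Ht; try lia. exact: (F1 k t Hk').2. }
    have Agree : forall t k, dom t k -> (forall j, tau' t k j = tau t k j) /\ lam' t k = lam t k.
    { move=> t k Hd; have := F4 t k Hd => HkJ.
      rewrite /tau' /lam' (_ : (k == J.+1) = false) //; apply/eqP; lia. }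
    have AgreeF : forall t k, dom t k -> tau' t k = tau t k.
    { move=> t k Hd; apply: functional_extensionality => j; exact: (Agree t k Hd).1. }
    exists dom', tau', lam'.
    split; last first.
    { split; first exact Dsub. split; last exact Agree.
      exists b', J.+1; split.
      - right; split => //; rewrite EtsJ1; lra.
      - move=> Hd; have := F4 _ _ Hd; lia. }
    case: Hsol => [Hh [H00 [Hinit [Hac [HC [Hnull Hjump]]]]]].
    split.
    { apply: std_htd.
      - rewrite Ets //.
      - move=> k; rewrite ltnS leq_eqVlt => /orP [/eqP Ek|Hk].
        + subst k; rewrite Ets // EtsJ1; have := Hab'; rewrite /a; lra.
        + rewrite !Ets; try lia. apply: Hm; lia.
      - rewrite EtsJ1; lra. }
    split; first exact: Dsub.
    split; first by rewrite (AgreeF 0 0%N H00) (Agree 0 0%N H00).2.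
    split.
    { move=> k c d Hcd Hd'; case: (eqVneq k J.+1) => [Ek|Hk].
      - subst k; rewrite /tau' /lam' eqxx; split; [move=> j; exact: lin_ac| exact: const_ac].
      - rewrite /tau' /lam' (negbTE Hk); apply: Hac => // t Ht; apply: Dback; [exact/eqP| exact: Hd']. }
    split.
    { move=> t k [e [He Hnb]]; case: (eqVneq k J.+1) => [Ek|Hk].
      - subst k; exfalso.
        have [[H1 _]|[_ H1]] := Hnb (t - e / 2) ltac:(split_Rabs; lra); first lia.
        have [[H2 _]|[_ H2]] := Hnb (t + e / 2) ltac:(split_Rabs; lra); first lia.
        rewrite EtsJ1 in H1 H2; lra.
      - rewrite /in_C /tau' (negbTE Hk). apply: (HC t k); exists e; split => // s Hs.
        apply: Dback; [exact/eqP| exact: Hnb]. }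
    split.
    { move=> k; case: (eqVneq k J.+1) => [Ek|Hk].
      - subst k; apply: (null_mono (Hnull J)) => z [_ Hz]; exfalso; apply: Hz.
        rewrite /tau' /lam' eqxx; split; [move=> j; exact: lin_deriv| exact: const_deriv].
      - apply: (null_mono (Hnull k)); rewrite /tau' /lam' (negbTE Hk) => z [Hz1 Hz2].
        split; [apply: Dback; [exact/eqP| exact Hz1]| exact Hz2]. }
    move=> t k Hd1 Hd2.
    case: (eqVneq k J) => [Ek|Hk].
    + subst k.
      have Htb : t = b'.
      { case: Hd2 => [[H _]|[_ H]]; first lia. rewrite EtsJ1 in H; lra. }
      subst t.
      rewrite /tau' /lam' eqxx (_ : (J == J.+1) = false); last by apply/eqP; lia.
      rewrite -/x Hxl.
      split; first (split; [exact Hxc| by exists j0]).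
      split; last by [].
      have -> : (fun j => g j + (b' - b') / T) = g.
      { apply: functional_extensionality => j; rewrite Rminus_diag /Rdiv Rmult_0_l; ring. }
      move=> eps Heps; exists x, g; split.
      { move=> j; rewrite !Rminus_diag Rabs_R0; lra. }
      split; first (split; [exact Hxc| by exists j0]).
      exists j0; split; first exact Hxj0.
      split; first by rewrite /g eqxx.
      move=> j Hj; rewrite /Defs.Rset /g (_ : (j == j0) = false); last by apply/eqP.
      case: (xi J j0 j) => //.
      have [Hx0 Hx1] : 0 <= x j <= 1 := Hxc j.
      case: (Rlt_dec (x j) (r j)) => Hlt.
      * left; split; [split; lra| by []].
      * case: (Req_dec (x j) (r j)) => Heq.
        -- right; left; split; [exact Heq| by right].
        -- right; right; split; [split; lra| by []].
    + have Hk1 : k.+1 <> J.+1 by move=> Ek; apply: (elimN eqP Hk); lia.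
      have Hk0 : k <> J.+1.
      { move=> Ek; subst k. case: Hd2 => [[H _]|[H _]]; lia. }
      have Dt : dom t k by apply: Dback.
      have Dt1 : dom t k.+1 by apply: Dback.
      rewrite (AgreeF t k Dt) (AgreeF t k.+1 Dt1) (Agree t k Dt).2 (Agree t k.+1 Dt1).2.
      exact: Hjump.
  - (* flow extension *)
    apply: Hnomax.
    pose dom' := std_dom ts J b'.
    pose tau' := fun t k j => if k == J then y j + (t - a) / T else tau t k j.
    pose lam' := fun t k => if k == J then J else lam t k.
    have Dsub : forall t k, dom t k -> dom' t k.
    { move=> t k Hd; have := F4 t k Hd; rewrite leq_eqVlt => /orP [/eqP Ek|Hk].
      - subst k; right; split => //; have [Hat _] := F2 t Hd; have Htb := Hb'bound t Hd; rewrite /a in Hat; slra.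
      - left; split => //; exact: (F1 k t Hk).1. }
    have Dback : forall t k, k <> J -> dom' t k -> dom t k.
    { move=> t k Hk [[Hk' Ht]|[Ek _]]; last by []. exact: (F1 k t Hk').2. }
    have Agree : forall t k, dom t k -> (forall j, tau' t k j = tau t k j) /\ lam' t k = lam t k.
    { move=> t k Hd; rewrite /tau' /lam'; case: (eqVneq k J) => [Ek|Hk]; last by [].
      subst k; have [Hat Hs] := F2 t Hd; have [_ [_ [Hl Htau]]] := Hs t ltac:(lra).
      split; last by rewrite Hl. move=> j; by rewrite Htau. }
    have AgreeF : forall t k, dom t k -> tau' t k = tau t k.
    { move=> t k Hd; apply: functional_extensionality => j; exact: (Agree t k Hd).1. }
    exists dom', tau', lam'.
    split; last first.
    { split; first exact Dsub. split; last exact Agree.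
      exists b', J; split; last exact Hb'. right; split => //; have := Hab'; rewrite /a => ?; slra. }
    case: Hsol => [Hh [H00 [Hinit [Hac [HC [Hnull Hjump]]]]]].
    split; first (apply: std_htd => //; [move=> k Hk; apply: Hm; lia]).
    split; first exact: Dsub.
    split; first by rewrite (AgreeF 0 0%N H00) (Agree 0 0%N H00).2.
    split.
    { move=> k c d Hcd Hd'; case: (eqVneq k J) => [Ek|Hk].
      - subst k; rewrite /tau' /lam' eqxx; split; [move=> j; exact: lin_ac| exact: const_ac].
      - rewrite /tau' /lam' (negbTE Hk); apply: Hac => // t Ht; apply: Dback; [exact/eqP| exact: Hd']. }
    split.
    { move=> t k [e [He Hnb]]; case: (eqVneq k J) => [Ek|Hk].
      - subst k; rewrite /in_C /tau' eqxx => j.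
        have [[H1 _]|[_ H1]] := Hnb (t - e / 2) ltac:(split_Rabs; lra); first lia.
        have [[H2 _]|[_ H2]] := Hnb (t + e / 2) ltac:(split_Rabs; lra); first lia.
        have [Hy0 Hy1] := Hy j. have := Hj0 j.
        have : 0 < (t - a) / T by apply: div_pos; rewrite /a; lra.
        have : (t - a) / T < (b' - a) / T by apply: div_lt_mono; lra.
        rewrite Hdiv; lra.
      - rewrite /in_C /tau' (negbTE Hk). apply: (HC t k); exists e; split => // s Hs.
        apply: Dback; [exact/eqP| exact: Hnb]. }
    split.
    { move=> k; case: (eqVneq k J) => [Ek|Hk].
      - subst k; apply: (null_mono (Hnull J)) => x [_ Hx]; exfalso; apply: Hx.
        rewrite /tau' /lam' eqxx; split; [move=> j; exact: lin_deriv| exact: const_deriv].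
      - apply: (null_mono (Hnull k)); rewrite /tau' /lam' (negbTE Hk) => x [Hx1 Hx2].
        split; [apply: Dback; [exact/eqP| exact Hx1]| exact Hx2]. }
    move=> t k Hd1 Hd2.
    have HkJ : (k < J)%N by case: Hd2 => [[H _]|[H _]]; lia.
    have Dt : dom t k by apply: Dback => //; lia.
    have Dt1 : dom t k.+1.
    { case: (eqVneq k.+1 J) => [Ek|Hk]; last by apply: Dback => //; exact/eqP.
      have [_ Hle] := (F1 k t HkJ).1 Dt.
      rewrite Ek in Hle Hd2 *.
      case: Hd2 => [[H _]|[_ [H _]]]; first lia.
      have -> : t = a by rewrite /a; lra. exact Da. }
    rewrite (AgreeF t k Dt) (AgreeF t k.+1 Dt1) (Agree t k Dt).2 (Agree t k.+1 Dt1).2.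
    exact: Hjump.
Qed.

End Sol.

Definition eqph (u v : R) : Prop := u = v \/ ((u = 0 \/ u = 1) /\ (v = 0 \/ v = 1)).

Lemma eqph_sym u v : eqph u v -> eqph v u.
Proof. case=> [->|[H1 H2]]; [left| right]; tauto. Qed.

Lemma eqph_trans u v w : eqph u v -> eqph v w -> eqph u w.
Proof. rewrite /eqph; move=> [->|[H1 H2]] [<-|[H3 H4]]; tauto. Qed.

Lemma cnt_le_m (c : nat) rm : 0 < rm -> INR c * rm <= 1 + rm ->
  (c <= Z.to_nat (Int_part (/ rm)) + 1)%N.
Proof.
  move=> Hrm H.
  have Hc : INR c <= / rm + 1.
  { have -> : / rm + 1 = (1 + rm) / rm by field; lra.
    have -> : INR c = (INR c * rm) / rm by field; lra.
    apply: div_le_mono => //. }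
  have [Hz1 Hz2] := base_Int_part (/ rm).
  have Hinv : 0 < / rm by apply: Rinv_0_lt_compat.
  have Hz0 : (0 <= Int_part (/ rm))%Z.
  { have : (-1 < Int_part (/ rm))%Z by apply: lt_IZR; lra.
    lia. }
  have Ez : IZR (Int_part (/ rm)) = INR (Z.to_nat (Int_part (/ rm))).
  { by rewrite INR_IZR_INZ Znat.Z2Nat.id. }
  have : INR c < INR (Z.to_nat (Int_part (/ rm)) + 2).
  { have E2 : INR 2 = 2 by rewrite /=; ring.
    rewrite plus_INR -Ez E2; lra. }
  move/INR_lt => /ltP; lia.
Qed.

Lemma rmin_le N (r : 'I_N -> R) a : rmin r <= r a.
Proof.
  rewrite /rmin.
  suff : forall s : seq 'I_N, a \in s -> \big[Rmin/1]_(i <- s) r i <= r a.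
    by apply; rewrite mem_index_enum.
  elim=> [|x s IH] //; rewrite in_cons big_cons => /orP [/eqP <-|Hs].
  - apply: Rmin_l.
  - have := IH Hs; have := Rmin_r (r x) (\big[Rmin/1]_(i <- s) r i); lra.
Qed.

Lemma bigmin_pos (I : Type) (s : seq I) (F : I -> R) : (forall i, 0 < F i < 1) ->
  0 < \big[Rmin/1]_(i <- s) F i /\ \big[Rmin/1]_(i <- s) F i <= 1.
Proof.
  move=> Hr; elim: s => [|x s [IH1 IH2]]; rewrite ?big_nil ?big_cons; first (split; lra).
  have := Hr x => Hx.
  have [->|->] : Rmin (F x) (\big[Rmin/1]_(j <- s) F j) = F x \/
     Rmin (F x) (\big[Rmin/1]_(j <- s) F j) = \big[Rmin/1]_(j <- s) F j.
  { unfold Rmin; destruct Rle_dec; [left|right]; reflexivity. }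
  all: split; lra.
Qed.

Lemma rmin_pos N (r : 'I_N -> R) : (forall i, 0 < r i < 1) -> 0 < rmin r /\ rmin r <= 1.
Proof. move=> Hr; exact: bigmin_pos. Qed.

Fixpoint cntf N (f : nat -> 'I_N) (K0 : nat) (a : 'I_N) (n : nat) : nat :=
  match n with 0 => 0%N | n'.+1 => (cntf f K0 a n' + (f (K0 + n')%N == a))%N end.

Fixpoint gsum (d : nat -> R) (K0 n : nat) : R :=
  match n with 0 => 0 | n'.+1 => gsum d K0 n' + d (K0 + n')%N end.

Lemma sum_cntf N (f : nat -> 'I_N) K0 n : (\sum_(a : 'I_N) cntf f K0 a n)%N = n.
Proof.
  elim: n => [|n IH] /=; first by rewrite big1.
  rewrite big_split /= IH (bigD1 (f (K0 + n)%N)) //= eqxx big1 ?addn0 ?addn1 //.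
  move=> a Ha; apply/eqP; rewrite eqb0; by rewrite eq_sym.
Qed.

Lemma sum_bound N (c : 'I_N -> nat) (p : 'I_N) m : (forall a, (c a <= m)%N) -> c p = 0%N ->
  ((\sum_(a : 'I_N) c a) + m <= N * m)%N.
Proof.
  move=> Hc Hp.
  have H1 : ((\sum_(a : 'I_N) c a) <= \sum_(a : 'I_N | a != p) m)%N.
  { rewrite (bigD1 p) //= Hp add0n; apply: leq_sum => a _; exact: Hc. }
  have H2 : (\sum_(a : 'I_N) m = m + \sum_(a : 'I_N | a != p) m)%N by rewrite (bigD1 p).
  have H3 : (\sum_(a : 'I_N) m = N * m)%N by rewrite sum_nat_const card_ord.
  lia.
Qed.

Section Disc.
Variables (N : nat) (E : rel 'I_N) (r : 'I_N -> R) (xi : nat -> rel 'I_N) (istar : 'I_N) (T : R)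
  (y x : nat -> 'I_N -> R) (d : nat -> R) (fire : nat -> 'I_N) (J : nat).
Hypothesis HT : 0 < T.
Hypothesis Hr : forall i, 0 < r i < 1.
Hypothesis Hflow : forall k, (k <= J)%N -> forall j, x k j = y k j + d k / T.
Hypothesis Hd : forall k, (k <= J)%N -> 0 <= d k.
Hypothesis Hyc : forall k, (k <= J)%N -> in_unit_cube (y k).
Hypothesis Hxc : forall k, (k <= J)%N -> in_unit_cube (x k).
Hypothesis Hjump : forall k, (k < J)%N -> Jrel r (xi k) (fire k) (x k) (y k.+1).

Definition sync (S : 'I_N -> Prop) (z : 'I_N -> R) := forall a, S a -> eqph (z a) (z istar).

Lemma flow_sync S k : (k <= J)%N -> sync S (y k) -> sync S (x k).
Proof.
  move=> Hk Hs a Sa; rewrite !Hflow //.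
  have [Ya0 Ya1] := Hyc Hk a; have [Yi0 Yi1] := Hyc Hk istar.
  have [Xa0 Xa1] := Hxc Hk a; have [Xi0 Xi1] := Hxc Hk istar.
  rewrite !Hflow // in Xa1 Xi1.
  have Hdt : 0 <= d k / T by apply: div_nonneg; [exact: Hd|].
  case: (Hs a Sa) => [->|[H1 H2]]; first by left.
  case: (Req_dec (d k / T) 0) => Hz.
  - rewrite Hz !Rplus_0_r; right; tauto.
  - left; lra.
Qed.

Lemma jump_sync S k : (k < J)%N -> S istar ->
  (forall b, S b -> b <> fire k -> xi k (fire k) b -> S (fire k)) ->
  sync S (x k) -> sync S (y k.+1).
Proof.
  move=> Hk Si HS Hs.
  have [Hx1 [Hy0 Hj]] := Hjump Hk.
  case: (classic (S (fire k))) => Sf.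
  - have Hall : forall a, S a -> x k a = 0 \/ x k a = 1.
    { move=> a Sa.
      have Hi : x k istar = 0 \/ x k istar = 1.
      { case: (Hs _ Sf) => [E1|[_ H]]; [rewrite -E1 Hx1; by right| exact H]. }
      case: (Hs a Sa) => [->|[H _]]; [exact Hi| exact H]. }
    have Hall' : forall a, S a -> y k.+1 a = 0 \/ y k.+1 a = 1.
    { move=> a Sa; case: (eqVneq a (fire k)) => [->|/eqP Ha]; first by left.
      have [Hph Hnph] := Hj a Ha.
      case E1: (xi k (fire k) a).
      - exact: (Hph E1).1.
      - rewrite Hnph; [exact: Hall| by rewrite E1]. }
    move=> a Sa; right; split; [exact: Hall'| exact: Hall'].
  - have Hsame : forall a, S a -> y k.+1 a = x k a.
    { move=> a Sa; have Ha : a <> fire k by move=> E1; apply: Sf; rewrite -E1.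
      have [_ Hnph] := Hj a Ha; apply: Hnph.
      apply/negP => Hx; apply: Sf; exact: (HS a Sa Ha Hx). }
    move=> a Sa; rewrite !Hsame //; exact: Hs.
Qed.

Lemma sync_As z : in_unit_cube z -> sync (fun _ => True) z -> in_As z.
Proof.
  move=> Hc Hs.
  case: (classic (z istar = 0 \/ z istar = 1)) => Hi.
  - right => a; case: (Hs a I) => [->|[H _]]; [exact Hi| exact H].
  - left; exists (z istar); split; first exact: Hc.
    move=> a; case: (Hs a I) => [->|[_ H]] //; by [].
Qed.

Variable V : nat -> 'I_N -> Prop.
Hypothesis Hpred : forall q j, V q.+1 j -> exists p, V q p /\ E p j.
Hypothesis Huniq : forall q1 q2 a, V q1 a -> V q2 a -> q1 = q2.
Hypothesis HV0 : V 0%N istar.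

Definition Cle q := fun a => exists q', (q' <= q)%N /\ V q' a.

Lemma sync_prop S k1 k2 : (k1 <= k2)%N -> (k2 <= J)%N -> S istar ->
  (forall k b, (k1 <= k)%N -> (k < k2)%N -> S b -> b <> fire k -> xi k (fire k) b -> S (fire k)) ->
  sync S (y k1) -> sync S (y k2).
Proof.
  move=> H12 H2J Si HS Hs.
  suff : forall n, (k1 + n <= k2)%N -> sync S (y (k1 + n)).
    move=> /(_ (k2 - k1)%N); rewrite (_ : (k1 + (k2 - k1))%N = k2); last lia. apply; lia.
  elim=> [|n IH] Hn; first by rewrite addn0.
  rewrite (_ : (k1 + n.+1)%N = (k1 + n).+1); last lia.
  apply: jump_sync; [lia| exact Si| |].
  - move=> b Sb Hb Hx; apply: (HS (k1 + n)%N b) => //; lia.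
  - apply: flow_sync; [lia| apply: IH; lia].
Qed.

Lemma block q K0 (Hm : (0 < Z.to_nat (Int_part (/ rmin r)) + 1)%N) :
  let m := (Z.to_nat (Int_part (/ rmin r)) + 1)%N in
  (0 < N)%N -> (K0 + N * m <= J)%N ->
  (forall i, (i < N * m)%N -> forall a b, xi (K0 + i)%N a b <-> (E a b /\ V q a)) ->
  sync (Cle q) (y K0) -> sync (Cle q.+1) (y (K0 + N * m)%N).
Proof.
  move=> m HN HKJ Hblk Hs.
  set L := (N * m)%N in HKJ Hblk *.
  have Ciq : Cle q istar by exists 0%N; split => //; lia.
  have HSq : forall k b, (K0 <= k)%N -> (k < K0 + L)%N -> Cle q b -> b <> fire k ->
      xi k (fire k) b -> Cle q (fire k).
  { move=> k b Hk1 Hk2 _ _ Hx; exists q; split => //.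
    have := (Hblk (k - K0)%N ltac:(lia) (fire k) b).1; rewrite (_ : (K0 + (k - K0))%N = k); last lia.
    by move=> /(_ Hx) [_ HV]. }
  have Ha : forall n, (n <= L)%N -> sync (Cle q) (y (K0 + n)%N).
  { move=> n Hn; apply: (sync_prop (k1 := K0)) => //; try lia.
    move=> k b Hk1 Hk2 Sb Hb Hx; apply: (HSq k b) => //; lia. }
  have Hax : forall n, (n < L)%N -> sync (Cle q) (x (K0 + n)%N).
  { move=> n Hn; apply: flow_sync; [lia| apply: Ha; lia]. }
  have Hfire : forall p, V q p -> exists n, (n < L)%N /\ fire (K0 + n)%N = p.
  { move=> p Vp; apply: NNPP => Hnf.
    have Hnf' : forall n, (n < L)%N -> fire (K0 + n)%N <> p.
    { move=> n Hn Hf; apply: Hnf; exists n; split => //. }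
    have [Hrm0 Hrm1] := rmin_pos Hr.
    pose rm := rmin r.
    have Hrm0' : 0 < rm := Hrm0.
    have Hrm1' : rm <= 1 := Hrm1.
    have Hp : forall n, (n <= L)%N -> y (K0 + n)%N p = y K0 p + gsum d K0 n / T.
    { elim=> [|n IH] Hn; first by rewrite addn0 /= /Rdiv Rmult_0_l Rplus_0_r.
      have Hk : (K0 + n < J)%N by lia.
      have [Hx1 [_ Hj]] := Hjump Hk.
      have Hpf : p <> fire (K0 + n)%N by move=> E1; apply: (Hnf' n); [lia| by rewrite E1].
      have [Hph Hnph] := Hj p Hpf.
      have Hstep : y (K0 + n).+1 p = x (K0 + n)%N p.
      { case E1: (xi (K0 + n)%N (fire (K0 + n)%N) p).
        - have Cf : Cle q (fire (K0 + n)%N).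
          { exists q; split => //. have := (Hblk n ltac:(lia) _ p).1 E1; by case. }
          have Cp : Cle q p by exists q; split.
          have Hsx := Hax n ltac:(lia).
          have Hi : x (K0 + n)%N istar = 0 \/ x (K0 + n)%N istar = 1.
          { case: (Hsx _ Cf) => [E2|[_ H]]; [rewrite -E2 Hx1; by right| exact H]. }
          have Hxp : x (K0 + n)%N p = 0 \/ x (K0 + n)%N p = 1.
          { case: (Hsx p Cp) => [->|[H _]]; [exact Hi| exact H]. }
          have [Hg01 [Hlt Hgt]] := Hph E1.
          have := Hr p.
          case: Hxp => Exp Hrp; rewrite Exp.
          + apply: Hlt; rewrite Exp; lra.
          + apply: Hgt; rewrite Exp; lra.
        - apply: Hnph; by rewrite E1. }
      rewrite (_ : (K0 + n.+1)%N = (K0 + n).+1); last lia.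
      rewrite Hstep Hflow; last lia.
      rewrite IH; last lia.
      rewrite /=; field; lra. }
    have HG : gsum d K0 L <= T.
    { have := Hp L (leqnn L).
      have [_ H1] := Hyc (k := (K0 + L)%N) ltac:(lia) p.
      have [H0 _] := Hyc (k := K0) ltac:(lia) p.
      move=> E1; rewrite E1 in H1.
      have : gsum d K0 L / T <= 1 by lra.
      move/(div_le_inv HT); lra. }
    have Hcnt : forall a n, (n <= L)%N ->
        INR (cntf fire K0 a n) * rm * T + T * Rmin (y (K0 + n)%N a) rm <= gsum d K0 n + rm * T.
    { move=> a; elim=> [|n IH] Hn.
      - rewrite /= addn0 Rmult_0_l Rmult_0_l Rplus_0_l Rplus_0_l.
        rewrite (Rmult_comm rm T); apply: Rmult_le_compat_l; [lra| apply: Rmin_r].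
      - have Hk : (K0 + n < J)%N by lia.
        have IH' := IH ltac:(lia).
        have [Hx1 [Hy0 Hj]] := Hjump Hk.
        set k := (K0 + n)%N in Hk Hx1 Hy0 Hj IH'.
        have Hdk := Hd (k := k) ltac:(lia).
        have HX : x k a = y k a + d k / T by apply: Hflow; lia.
        have [Ya0 Ya1] := Hyc (k := k) ltac:(lia) a.
        have [Xa0 Xa1] := Hxc (k := k) ltac:(lia) a.
        have Hflowmin : T * Rmin (x k a) rm <= T * Rmin (y k a) rm + d k.
        { have -> : d k = T * (d k / T) by field; lra.
          rewrite -Rmult_plus_distr_l; apply: Rmult_le_compat_l; first lra.
          have : 0 <= d k / T by apply: div_nonneg.
          rewrite HX; unfold Rmin; destruct Rle_dec; destruct Rle_dec; lra. }
        rewrite (_ : (K0 + n.+1)%N = k.+1); last (rewrite /k; lia).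
        rewrite /= -/k.
        have Hgs : gsum d K0 n.+1 = gsum d K0 n + d k by [].
        case: (eqVneq (fire k) a) => [Ef|Hne].
        + rewrite addn1 S_INR.
          rewrite Ef in Hx1 Hy0; rewrite Hy0.
          have E0 : Rmin 0 rm = 0 by unfold Rmin; destruct Rle_dec; lra.
          have E1 : Rmin (x k a) rm = rm by rewrite Hx1; unfold Rmin; destruct Rle_dec; lra.
          rewrite E0; rewrite E1 in Hflowmin.
          lra.
        + rewrite addn0.
          have Hmin : Rmin (y k.+1 a) rm <= Rmin (x k a) rm.
          { have Hne' : a <> fire k by move=> E1; rewrite E1 eqxx in Hne.
            have [Hph Hnph] := Hj a Hne'.
            have Hra := rmin_le r a.
            case E1: (xi k (fire k) a).
            - have [[G0|G1] [Hlt _]] := Hph E1.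
              + rewrite G0; unfold Rmin; destruct Rle_dec; destruct Rle_dec; lra.
              + rewrite G1.
                have Hxa : r a <= x k a.
                { apply: Rnot_lt_le => Hl; have := Hlt Hl; lra. }
                rewrite /rm; unfold Rmin; destruct Rle_dec; destruct Rle_dec; lra.
            - rewrite Hnph; [lra| by rewrite E1]. }
          have : T * Rmin (y k.+1 a) rm <= T * Rmin (x k a) rm by apply: Rmult_le_compat_l; lra.
          lra. }
    have Hcm : forall a, (cntf fire K0 a L <= m)%N.
    { move=> a; have := Hcnt a L (leqnn L) => H1.
      have [Y0 _] := Hyc (k := (K0 + L)%N) ltac:(lia) a.
      have : 0 <= T * Rmin (y (K0 + L)%N a) rm.
      { apply: Rmult_le_pos; first lra. unfold Rmin; destruct Rle_dec; lra. }
      move=> H2.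
      apply: cnt_le_m; first exact Hrm0.
      apply: (Rmult_le_reg_r T) => //.
      have -> : (1 + rmin r) * T = T + rm * T by rewrite /rm; ring.
      rewrite -/rm; lra. }
    have Hp0 : forall n, (n <= L)%N -> cntf fire K0 p n = 0%N.
    { elim=> [|n IH] Hn //=; rewrite IH; last lia.
      have := Hnf' n ltac:(lia) => Hne.
      rewrite (_ : (fire (K0 + n)%N == p) = false) //; exact/eqP. }
    have := sum_bound (c := fun a => cntf fire K0 a L) Hcm (Hp0 L (leqnn L)).
    rewrite sum_cntf -/L; lia. }
  have Hnew : forall j, V q.+1 j -> sync (fun a => Cle q a \/ a = j) (y (K0 + L)%N).
  { move=> j Vj.
    have [p [Vp Epj]] := Hpred Vj.
    have [n [Hn Hf]] := Hfire p Vp.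
    have Hk : (K0 + n < J)%N by lia.
    have [Hx1 [Hy0 Hj]] := Hjump Hk.
    rewrite Hf in Hx1 Hy0 Hj.
    have Hjp : j <> p by move=> E1; subst j; have := Huniq Vj Vp; lia.
    have [Hph _] := Hj j Hjp.
    have Hxij : xi (K0 + n)%N p j by apply: (Hblk n Hn p j).2; split.
    have [Hj01 _] := Hph Hxij.
    have Hsn := Ha n.+1 Hn.
    rewrite (_ : (K0 + n.+1)%N = (K0 + n).+1) in Hsn; last lia.
    apply: (sync_prop (k1 := (K0 + n).+1)); [lia| lia| by left| |].
    - move=> k b Hk1 Hk2 _ _ Hx; left.
      have Hkl : (k - K0 < L)%N by lia.
      have := (Hblk (k - K0)%N Hkl (fire k) b).1.
      rewrite (_ : (K0 + (k - K0))%N = k); last lia.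
      move=> /(_ Hx) [_ HV]; exists q; split => //.
    - move=> a [Sa|->]; first exact: Hsn.
      have Cp : Cle q p by exists q; split.
      have := Hsn p Cp; rewrite Hy0 => Hi.
      right; split; first exact Hj01.
      case: Hi => [<-|[_ H]]; [by left| exact H]. }
  move=> a [q' [Hq' Vq']].
  case: (eqVneq q' q.+1) => [Eq|Hne].
  - subst q'; apply: (Hnew a Vq'); by right.
  - apply: (Ha L (leqnn L)); exists q'; split => //; lia.
Qed.

Hypothesis HV0u : forall a, V 0%N a -> a = istar.

Lemma all_sync s qs :
  let L := (N * (Z.to_nat (Int_part (/ rmin r)) + 1))%N in
  (0 < N)%N -> (s + L * qs <= J)%N ->
  (forall i, (i < L * qs)%N -> forall a b, xi (s + i)%N a b <-> (E a b /\ V (i %/ L) a)) ->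
  (forall a, exists q, (q <= qs)%N /\ V q a) ->
  forall k, (s + L * qs <= k)%N -> (k <= J)%N -> sync (fun _ => True) (y k).
Proof.
  move=> L HN HsJ Hxi Hall.
  have Hm : (0 < Z.to_nat (Int_part (/ rmin r)) + 1)%N by lia.
  have HL : (0 < L)%N by rewrite /L; lia.
  have Hq : forall q, (q <= qs)%N -> sync (Cle q) (y (s + L * q)%N).
  { elim=> [|q IH] Hq.
    - move=> a [q' [Hq' Vq']]. have Eq : q' = 0%N by lia. subst q'.
      rewrite muln0 addn0 (HV0u Vq'); by left.
    - have := block (q := q) (K0 := (s + L * q)%N) Hm HN.
      rewrite -/L (_ : (s + L * q + L)%N = (s + L * q.+1)%N); last by rewrite mulnS; lia.
      have HLq : (L * q.+1 <= L * qs)%N by rewrite leq_mul2l Hq orbT.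
      move=> H; apply: H.
      + rewrite mulnS in HLq *; lia.
      + move=> i Hi a b.
        have Hi' : (L * q + i < L * qs)%N by rewrite mulnS in HLq; lia.
        rewrite -addnA (Hxi _ Hi' a b).
        rewrite (_ : ((L * q + i) %/ L)%N = q) //.
        by rewrite mulnC divnMDl // divn_small // addn0.
      + apply: IH; lia. }
  have Hfull := Hq qs (leqnn qs).
  move=> k Hk1 Hk2.
  apply: (sync_prop (k1 := (s + L * qs)%N)) => //.
  move=> a _; have [q [Hq' Vq]] := Hall a.
  apply: Hfull; exists q; split => //.
Qed.

End Disc.

Lemma sync_shift N (istar : 'I_N) S (z z' : 'I_N -> R) c : 0 <= c ->
  in_unit_cube z -> in_unit_cube z' -> (forall j, z' j = z j + c) ->
  sync istar S z -> sync istar S z'.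
Proof.
  move=> Hc Hz Hz' Hl Hs a Sa; rewrite !Hl.
  have [Xa0 Xa1] := Hz' a; have [Xi0 Xi1] := Hz' istar.
  rewrite !Hl in Xa1 Xi1.
  case: (Hs a Sa) => [->|[H1 H2]]; first by left.
  case: (Req_dec c 0) => Hz0.
  - rewrite Hz0 !Rplus_0_r; right; tauto.
  - left; lra.
Qed.

Lemma ex_min (P : nat -> Prop) : (exists n, P n) -> exists n, P n /\ forall m, P m -> (n <= m)%N.
Proof.
  move=> [n Hn]; apply: NNPP => Hno.
  suff : forall n k, (k <= n)%N -> ~ P k by move/(_ n n (leqnn n)).
  elim=> [|n' IH] k Hk Pk; apply: Hno; exists k; split => // m Pm; apply: NNPP => Hkm.
  - lia.
  - apply: (IH m); [lia| exact Pm].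
Qed.

Section Graph.
Variables (N : nat) (E : rel 'I_N) (istar : 'I_N).

Lemma Vq_exists : is_root E istar -> forall j, exists q, in_Vq E istar q j.
Proof.
  move=> Hroot j.
  have [rest Hrest] : exists rest, is_path E istar j rest.
  { case: (eqVneq j istar) => [->|Hne].
    - exists [::]; rewrite /is_path /=; split => //.
    - apply: Hroot; exact/eqP. }
  have [q [[rest' [Hp Hs]] Hmin]] := ex_min (P := fun q => exists rest, is_path E istar j rest /\ size rest = q)
     (ex_intro _ (size rest) (ex_intro _ rest (conj Hrest erefl))).
  exists q; split; first by exists rest'.
  move=> rest2 Hp2; apply: Hmin; by exists rest2.
Qed.

Lemma Vq_uniq q1 q2 a : in_Vq E istar q1 a -> in_Vq E istar q2 a -> q1 = q2.
Proof.
  move=> [[r1 [Hp1 Hs1]] Hm1] [[r2 [Hp2 Hs2]] Hm2].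
  have := Hm1 r2 Hp2; have := Hm2 r1 Hp1; lia.
Qed.

Lemma Vq0 a : in_Vq E istar 0%N a -> a = istar.
Proof.
  move=> [[rest [[_ [_ Hl]] Hs]] _].
  by case: rest Hs Hl => // _ /= <-.
Qed.

Lemma Vq0_istar : in_Vq E istar 0%N istar.
Proof.
  split; first by exists [::]; rewrite /is_path /=.
  move=> ? ?; lia.
Qed.

Lemma Vq_pred q j : in_Vq E istar q.+1 j -> exists p, in_Vq E istar q p /\ E p j.
Proof.
  move=> [[rest [[Hpath [Huq Hlast]] Hs]] Hmin].
  case/lastP: rest Hpath Huq Hlast Hs => [|rest' z] //.
  rewrite last_rcons => Hpath Huq Ez; subst z.
  rewrite size_rcons => /eqP; rewrite eqSS => /eqP Hs.
  rewrite rcons_path in Hpath; case/andP: Hpath => Hpath' Hedge.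
  exists (last istar rest'); split; last exact Hedge.
  have Huq' : uniq (istar :: rest').
  { move: Huq; rewrite -cats1 -cat_cons cat_uniq; by case/andP. }
  split; first by exists rest'.
  move=> rest2 [Hp2 [Hu2 Hl2]].
  apply: NNPP => Hlt.
  have Hlt' : (size rest2 < q)%N by lia.
  case Hjin: (j \in istar :: rest2).
  - move: Hjin; rewrite in_cons => /orP [/eqP Ej|Hjr].
    +
      have := Hmin [::]; rewrite /is_path /= Ej => /(_ (conj isT (conj isT erefl))); lia.
    + case/splitPr: Hjr Hp2 Hu2 Hl2 Hlt' => p1 p2 Hp2 Hu2 Hl2 Hlt'.
      have Hpj : is_path E istar j (rcons p1 j).
      { split; last split.
        - rewrite cat_path in Hp2; case/andP: Hp2 => Hp2a /= /andP [Hp2b _].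
          by rewrite rcons_path Hp2a Hp2b.
        - apply: (subseq_uniq _ Hu2).
          rewrite -cats1 -cat_cons (_ : istar :: p1 ++ j :: p2 = (istar :: p1 ++ [:: j]) ++ p2).
          + exact: prefix_subseq.
          + by rewrite cat_cons -catA.
        - by rewrite last_rcons. }
      have := Hmin _ Hpj; rewrite size_rcons size_cat /= in Hlt' *; lia.
  - have Hpj : is_path E istar j (rcons rest2 j).
    { split; last split.
      - by rewrite rcons_path Hp2 Hl2 Hedge.
      - move: Hjin Hu2 => /negbT; rewrite in_cons negb_or => /andP [Hji Hjr] /= /andP [Hir Hur].
        rewrite mem_rcons in_cons negb_or eq_sym Hji Hir /= rcons_uniq Hjr Hur //.
      - by rewrite last_rcons. }
    have := Hmin _ Hpj; rewrite size_rcons; lia.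
Qed.

End Graph.

Unset Implicit Arguments.

Theorem theorem1 (N : nat) (E : rel 'I_N) (T : R) (r : 'I_N -> R)
    (xi : nat -> rel 'I_N) (istar : 'I_N) :
  simple_digraph E -> rooted E -> 0 < T -> (forall i, 0 < r i < 1) ->
  (forall n, feasible E (xi n)) ->
  is_root E istar -> contains_sync E r istar xi ->
  exists (tbar : R) (kbar : nat), 0 <= tbar /\
    forall dom tau lam,
      is_maximal_solution E T r xi dom tau lam ->
      lam 0 0%N = 0%N -> in_unit_cube (tau 0 0%N) ->
      exists tst kst, dom tst kst /\ tst <= tbar /\ (kst <= kbar)%N /\
        forall t k, dom t k -> tst <= t -> (kst <= k)%N -> in_As (tau t k).
Proof.
  move=> _ _ HT Hr _ Hroot [qs [s [Hqs Hsync]]].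
  case: (posnP N) => HN0.
  { subst N. exists 0, 0%N; split; first lra.
    move=> dom tau lam [Hsol _] _ _; exists 0, 0%N.
    split; first by case: Hsol => [_ [H _]].
    split; first lra. split => // t k _ _ _. right => a; by case: a. }
  pose L := ellstar r.
  pose Kst := (s + L * qs)%N.
  have j0 : 'I_N := Ordinal HN0.
  exists (INR Kst * T), Kst; split.
  { apply: Rmult_le_pos; [apply: pos_INR| lra]. }
  move=> dom tau lam [Hsol Hnomax] Hl0 Hc0.
  have [t1 [k1 [Hd1 Hk1]]] := reach HT Hsol Hl0 Hc0 HN0 Hnomax Kst.
  have [ts [H0 [HJ [Hm [Hin [Hch _]]]]]] := chain HT Hsol Hl0 Hc0 Hd1.
  exists (ts Kst), Kst.
  split; first exact: (Hch Kst (ts Kst) Hk1 ltac:(have := Hm Kst Hk1; lra)).1.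
  split.
  { have Hstep : forall k, (k <= k1)%N -> ts k.+1 - ts k <= T.
    { move=> k Hk.
      have [_ [Ca [_ Fa]]] := Hch k (ts k.+1) Hk ltac:(have := Hm k Hk; lra).
      have [_ [Cb _]] := Hch k (ts k) Hk ltac:(have := Hm k Hk; lra).
      have [A0 A1] := Ca j0; have [B0 B1] := Cb j0.
      rewrite Fa in A1.
      have : (ts k.+1 - ts k) / T <= 1 by lra.
      move/(div_le_inv HT); lra. }
    suff : forall k, (k <= Kst)%N -> ts k <= INR k * T by apply.
    elim=> [|k IH] Hk; first by rewrite H0 /= Rmult_0_l; lra.
    have := IH ltac:(lia); have := Hstep k ltac:(lia); rewrite S_INR; lra. }
  split; first by [].
  move=> t k Hd _ Hk.
  have [ts2 [H02 [HJ2 [Hm2 [Hin2 [Hch2 Hjmp2]]]]]] := chain HT Hsol Hl0 Hc0 Hd.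
  have Hfire : forall k', exists i, (k' < k)%N -> Jrel r (xi k') i (tau (ts2 k'.+1) k') (tau (ts2 k'.+1) k'.+1).
  { move=> k'; case: (ltnP k' k) => Hk'.
    - have [i Hi] := Hjmp2 k' Hk'; by exists i.
    - by exists j0. }
  pose fire := fun k' => proj1_sig (constructive_indefinite_description _ (Hfire k')).
  have Hfire' : forall k', (k' < k)%N -> Jrel r (xi k') (fire k') (tau (ts2 k'.+1) k') (tau (ts2 k'.+1) k'.+1).
  { move=> k' Hk'; exact: (proj2_sig (constructive_indefinite_description _ (Hfire k')) Hk'). }
  have Hyk : sync istar (fun _ => True) (tau (ts2 k) k).
  { apply: (@all_sync N E r xi istar T (fun k' => tau (ts2 k') k') (fun k' => tau (ts2 k'.+1) k')
       (fun k' => ts2 k'.+1 - ts2 k') fire k HT Hr _ _ _ _ Hfire' (fun q a => in_Vq E istar q a)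
       _ _ _ _ s qs HN0 _ _ _ k _ (leqnn k)).
    - move=> k' Hk' j; exact: (Hch2 k' (ts2 k'.+1) Hk' ltac:(have := Hm2 k' Hk'; lra)).2.2.2 j.
    - move=> k' Hk' /=; have := Hm2 k' Hk'; lra.
    - move=> k' Hk'; exact: (Hch2 k' (ts2 k') Hk' ltac:(have := Hm2 k' Hk'; lra)).2.1.
    - move=> k' Hk'; exact: (Hch2 k' (ts2 k'.+1) Hk' ltac:(have := Hm2 k' Hk'; lra)).2.1.
    - move=> q j; exact: Vq_pred.
    - move=> q1 q2 a; exact: Vq_uniq.
    - exact: Vq0_istar.
    - move=> a; exact: Vq0.
    - exact Hk.
    - move=> i Hi a b; rewrite /Gq in Hsync; exact: Hsync.
    - move=> a; have [q Hq] := Vq_exists Hroot a; exists q; split => //.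
      exact: Hqs.2 q a Hq.
    - exact Hk. }
  have [Dt [Ct [_ Ft]]] := Hch2 k t (leqnn k) ltac:(have := Hm2 k (leqnn k); lra).
  have [_ [Ck _]] := Hch2 k (ts2 k) (leqnn k) ltac:(have := Hm2 k (leqnn k); lra).
  apply: (sync_As (istar := istar)) => //.
  apply: (sync_shift (c := (t - ts2 k) / T)) Ck Ct Ft Hyk.
  apply: div_nonneg; [have := Hm2 k (leqnn k); lra| exact HT].
Qed.
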